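(* Let $\alpha,\beta\in(0,1)$ with $\alpha+\beta>1$, and let $v\in\mathcal{C}^\alpha(L(\mathbb{R}^d,\mathbb{R}^n))$, $w\in\mathcal{C}^\beta(\mathbb{R}^d)$. Then the integral \[ I(v,dw):=\sum_{p,q\ge-1}\int_0^\cdot\Delta_pv(s)\,d\Delta_qw(s)=\lim_{N\to\infty}\int_0^\cdot S_Nv(s)\,d(S_Nw)(s) \] exists (uniform limit), satisfies $I(v,dw)=L(v,w)+S(v,w)+\pi_<(v,w)\in\mathcal{C}^\beta(\mathbb{R}^n)$, $\|I(v,dw)\|_\beta\lesssim\|v\|_\alpha\|w\|_\beta$, and \[ \|I(v,dw)-\pi_<(v,w)\|_{\alpha+\beta}\lesssim\|v\|_\alpha\|w\|_\beta. \]
   Context: Index set: pairs $(p,m)$ with either $p=-1,m=0$, or $p\in\mathbb{N}=\{0,1,2,\dots\}$ and $0\le m\le 2^p$. For $p\in\mathbb{N}$, $1\le m\le 2^p$ set $t^0_{pm}=(m-1)2^{-p}$, $t^1_{pm}=(2m-1)2^{-p-1}$, $t^2_{pm}=m2^{-p}$. Rescaled Haar functions: for $p\in\mathbb{N}$, $1\le m\le 2^p$, $\chi_{pm}=2^p$ on $[t^0_{pm},t^1_{pm})$, $=-2^p$ on $[t^1_{pm},t^2_{pm})$, $=0$ elsewhere; $\chi_{00}\equiv1$; $\chi_{p0}\equiv0$ for $p\ge1$. Rescaled Schauder functions: $\varphi_{pm}(t)=\int_0^t\chi_{pm}(s)\,ds$ for $p\in\mathbb{N}$, and $\varphi_{-10}\equiv1$.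 For continuous $f:[0,1]\to E$ ($E$ a finite-dimensional normed space), coefficients: $f_{-10}=f(0)$, $f_{00}=f(1)-f(0)$, $f_{p0}=0$ for $p\ge1$, $f_{pm}=2f(t^1_{pm})-f(t^0_{pm})-f(t^2_{pm})$ for $p\in\mathbb{N},m\ge1$. Schauder blocks: $\Delta_pf=\sum_{m=0}^{2^p}f_{pm}\varphi_{pm}$ ($p\ge-1$), $S_pf=\sum_{q=-1}^p\Delta_qf$ (piecewise linear). For $\alpha>0$, $\|f\|_\alpha:=\sup_{p,m}2^{p\alpha}|f_{pm}|$ and $\mathcal{C}^\alpha(E):=\{f\in C([0,1],E):\|f\|_\alpha<\infty\}$. For $g$ piecewise linear, $\int_0^tf\,dg:=\int_0^tf(s)g'(s)\,ds$, $\int_0^tdg\,f:=\int_0^tg'(s)f(s)\,ds$. Paraproduct $\pi_<(v,w):=\sum_{p\ge0}S_{p-1}v\,\Delta_pw$. Lévy area $L(v,w):=\sum_{p\ge0}\big(\int_0^\cdot\Delta_pv\,d(S_{p-1}w)-\int_0^\cdot d(S_{p-1}v)\,\Delta_pw\big)$. Symmetric part $S(v,w):=\sum_{m,n\in\{0,1\}}v_{0m}w_{0n}\int_0^\cdot\varphi_{0m}\varphi_{0n}'\,ds+\frac12\sum_{p\ge1}\Delta_pv\,\Delta_pw$. $\lesssim$ hides a constant depending only on $\alpha,\beta$. *)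

(* Defs.v *)
From Stdlib Require Import Reals Lra Lia ClassicalEpsilon.
Open Scope R_scope.

Fixpoint fsum (k : nat) (f : nat -> R) : R :=
  match k with O => 0 | S k' => fsum k' f + f k' end.
(* fmax k f = max(0, f 0, ..., f (k-1)) ; used only for nonnegative quantities *)
Fixpoint fmax (k : nat) (f : nat -> R) : R :=
  match k with O => 0 | S k' => Rmax (fmax k' f) (f k') end.

(* ---------- Riemann integral (value of RiemannInt if integrable) ---------- *)
Definition Rint (f : R -> R) (a b : R) : R :=
  epsilon (inhabits 0) (fun I => exists pr : Riemann_integrable f a b, RiemannInt pr = I).

Definition t0 (p m : nat) : R := INR (m - 1) / 2 ^ p.
Definition t1 (p m : nat) : R := (2 * INR m - 1) / 2 ^ (S p).
Definition t2 (p m : nat) : R := INR m / 2 ^ p.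

(* rescaled Haar functions chi_{pm}, p >= 0 *)
Definition chi (p m : nat) (t : R) : R :=
  match m with
  | O => match p with O => 1 | _ => 0 end
  | _ => if Rle_dec (t0 p m) t then
           if Rlt_dec t (t1 p m) then 2 ^ p
           else if Rlt_dec t (t2 p m) then - 2 ^ p else 0
         else 0
  end.

(* rescaled Schauder functions phi_{pm}(t) = int_0^t chi_{pm}, p >= 0,
   written out in closed form *)
Definition phi (p m : nat) (t : R) : R :=
  match m with
  | O => match p with O => t | _ => 0 end
  | _ => if Rle_dec (t0 p m) t then
           if Rlt_dec t (t1 p m) then 2 ^ p * (t - t0 p m)
           else if Rlt_dec t (t2 p m) then 2 ^ p * (t2 p m - t) else 0
         else 0
  end.

(* Schauder coefficients f_{pm}, p >= 0 (f_{-1,0} = f 0 handled separately) *)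
Definition coef (f : R -> R) (p m : nat) : R :=
  match m with
  | O => match p with O => f 1 - f 0 | _ => 0 end
  | _ => 2 * f (t1 p m) - f (t0 p m) - f (t2 p m)
  end.

Definition Delta (f : R -> R) (p : nat) (t : R) : R :=
  fsum (S (2 ^ p)) (fun m => coef f p m * phi p m t).
Definition dDelta (f : R -> R) (p : nat) (t : R) : R :=
  fsum (S (2 ^ p)) (fun m => coef f p m * chi p m t).

(* SS f k = S_{k-1} f  (so SS f 0 = Delta_{-1} f = f 0), and its a.e. derivative *)
Fixpoint SS (f : R -> R) (k : nat) (t : R) : R :=
  match k with O => f 0 | S k' => SS f k' t + Delta f k' t end.
Fixpoint dSS (f : R -> R) (k : nat) (t : R) : R :=
  match k with O => 0 | S k' => dSS f k' t + dDelta f k' t end.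

(* ---------- vector / matrix valued functions ----------
   vector-valued (R^n): f : nat -> R -> R, component i < n;
   matrix-valued (L(R^d,R^n)): v : nat -> nat -> R -> R, entry (i,j), i<n, j<d.
   Norms: sup norm on R^n, R^d; induced operator norm on L(R^d,R^n)
   (max over rows of the absolute row sums). *)

Definition vnorm (n : nat) (x : nat -> R) : R := fmax n (fun i => Rabs (x i)).
Definition mnorm (n d : nat) (A : nat -> nat -> R) : R :=
  fmax n (fun i => fsum d (fun j => Rabs (A i j))).

Definition cont01 (f : R -> R) : Prop :=
  forall t, 0 <= t <= 1 -> forall eps, 0 < eps -> exists del, 0 < del /\
    forall s, 0 <= s <= 1 -> Rabs (s - t) < del -> Rabs (f s - f t) < eps.
Definition vec_cont01 (n : nat) (f : nat -> R -> R) : Prop :=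
  forall i, (i < n)%nat -> cont01 (f i).
Definition mat_cont01 (n d : nat) (v : nat -> nat -> R -> R) : Prop :=
  forall i j, (i < n)%nat -> (j < d)%nat -> cont01 (v i j).

(* K bounds the quantity sup_{p,m} 2^{p a} |f_{pm}|, given the norms
   cm1 = |f_{-1,0}| and c p m = |f_{pm}| (p >= 0, 0 <= m <= 2^p). *)
Definition holder_bound (a K : R) (cm1 : R) (c : nat -> nat -> R) : Prop :=
  Rpower 2 (- a) * cm1 <= K /\
  forall p m, (m <= 2 ^ p)%nat -> Rpower 2 (INR p * a) * c p m <= K.

Definition vec_holder (n : nat) (a : R) (f : nat -> R -> R) (K : R) : Prop :=
  holder_bound a K (vnorm n (fun i => f i 0))
    (fun p m => vnorm n (fun i => coef (f i) p m)).
Definition mat_holder (n d : nat) (a : R) (v : nat -> nat -> R -> R) (K : R) : Prop :=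
  holder_bound a K (mnorm n d (fun i j => v i j 0))
    (fun p m => mnorm n d (fun i j => coef (v i j) p m)).

Definition Iapprox (d : nat) (v : nat -> nat -> R -> R) (w : nat -> R -> R)
  (N : nat) (i : nat) (t : R) : R :=
  fsum d (fun j => Rint (fun s => SS (v i j) (S N) s * dSS (w j) (S N) s) 0 t).

(* partial sums over p = 0..P-1 of the Levy area L(v,w) *)
Definition Lpart (d : nat) (v : nat -> nat -> R -> R) (w : nat -> R -> R)
  (P : nat) (i : nat) (t : R) : R :=
  fsum P (fun p => fsum d (fun j =>
     Rint (fun s => Delta (v i j) p s * dSS (w j) p s) 0 t
   - Rint (fun s => dSS (v i j) p s * Delta (w j) p s) 0 t)).

(* partial sums (p = 1..P in the series) of the symmetric part S(v,w) *)
Definition Spart (d : nat) (v : nat -> nat -> R -> R) (w : nat -> R -> R)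
  (P : nat) (i : nat) (t : R) : R :=
  fsum d (fun j => fsum 2 (fun m => fsum 2 (fun k =>
      coef (v i j) 0 m * coef (w j) 0 k * Rint (fun s => phi 0 m s * chi 0 k s) 0 t)))
  + / 2 * fsum P (fun p => fsum d (fun j => Delta (v i j) (S p) t * Delta (w j) (S p) t)).

(* partial sums over p = 0..P-1 of the paraproduct pi_<(v,w) *)
Definition Ppart (d : nat) (v : nat -> nat -> R -> R) (w : nat -> R -> R)
  (P : nat) (i : nat) (t : R) : R :=
  fsum P (fun p => fsum d (fun j => SS (v i j) p t * Delta (w j) p t)).

Definition unif_cv01 (n : nat) (F : nat -> nat -> R -> R) (G : nat -> R -> R) : Prop :=
  forall eps, 0 < eps -> exists N0, forall N, (N0 <= N)%nat ->
    forall i t, (i < n)%nat -> 0 <= t <= 1 -> Rabs (F N i t - G i t) < eps.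
Definition pw_cv01 (n : nat) (F : nat -> nat -> R -> R) (G : nat -> R -> R) : Prop :=
  forall i t, (i < n)%nat -> 0 <= t <= 1 -> Un_cv (fun N => F N i t) (G i t).

(* Main.v *)
From Stdlib Require Import Reals Lra Lia Arith ClassicalEpsilon.
From Coquelicot Require Import Coquelicot.
Require Import Defs.
Open Scope R_scope.

Ltac rabs := unfold Rabs in *; repeat match goal with
  | |- context [Rcase_abs ?x] => destruct (Rcase_abs x)
  | H : context [Rcase_abs ?x] |- _ => destruct (Rcase_abs x)
  end; try lra.

Lemma fsum_ext k f g : (forall m, (m < k)%nat -> f m = g m) -> fsum k f = fsum k g.
Proof. induction k; intros H; simpl; auto. rewrite IHk by (intros; apply H; lia). rewrite H by lia. auto. Qed.

Lemma fsum_plus k f g : fsum k (fun m => f m + g m) = fsum k f + fsum k g.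
Proof. induction k; simpl; [lra|]. rewrite IHk; lra. Qed.

Lemma fsum_scal k c f : fsum k (fun m => c * f m) = c * fsum k f.
Proof. induction k; simpl; [lra|]. rewrite IHk; lra. Qed.

Lemma fsum_minus k f g : fsum k (fun m => f m - g m) = fsum k f - fsum k g.
Proof. induction k; simpl; [lra|]. rewrite IHk; lra. Qed.

Lemma fsum_zero k : fsum k (fun _ => 0) = 0.
Proof. induction k; simpl; [lra|]. rewrite IHk; lra. Qed.

Lemma fsum_zero' k f : (forall m, (m < k)%nat -> f m = 0) -> fsum k f = 0.
Proof. intros H. rewrite (fsum_ext k f (fun _ => 0)) by auto. apply fsum_zero. Qed.

Lemma fsum_abs k f : Rabs (fsum k f) <= fsum k (fun m => Rabs (f m)).
Proof. induction k; simpl. rewrite Rabs_R0; lra.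
  eapply Rle_trans; [apply Rabs_triang|]. lra. Qed.

Lemma fsum_le k f g : (forall m, (m < k)%nat -> f m <= g m) -> fsum k f <= fsum k g.
Proof. induction k; intros H; simpl; [lra|]. specialize (IHk (fun m Hm => H m ltac:(lia))).
  specialize (H k ltac:(lia)). lra. Qed.

Lemma fsum_nonneg k f : (forall m, (m < k)%nat -> 0 <= f m) -> 0 <= fsum k f.
Proof. intros H. rewrite <- (fsum_zero k). apply fsum_le; auto. Qed.

Lemma fsum_single k f m0 : (m0 < k)%nat -> (forall m, (m < k)%nat -> m <> m0 -> f m = 0) ->
  fsum k f = f m0.
Proof. induction k; intros H1 H2; [lia|]. simpl.
  destruct (Nat.eq_dec m0 k) as [->|Hn].
  - rewrite fsum_zero'; [lra|]. intros m Hm. apply H2; lia.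
  - rewrite IHk by (try lia; intros; apply H2; lia). rewrite (H2 k) by lia. lra. Qed.

Lemma fsum_term_le k f m0 : (forall m, (m < k)%nat -> 0 <= f m) -> (m0 < k)%nat -> f m0 <= fsum k f.
Proof. induction k; intros H H0; [lia|]. simpl.
  destruct (Nat.eq_dec m0 k) as [->|Hn].
  - assert (0 <= fsum k f) by (apply fsum_nonneg; intros; apply H; lia). lra.
  - assert (f m0 <= fsum k f) by (apply IHk; [intros; apply H; lia| lia]).
    specialize (H k ltac:(lia)). lra. Qed.

Lemma fsum_swap a b f : fsum a (fun i => fsum b (fun j => f i j)) = fsum b (fun j => fsum a (fun i => f i j)).
Proof. induction a; simpl. rewrite fsum_zero; auto. rewrite IHa, <- fsum_plus. auto. Qed.

Lemma fsum_unique k g B : 0 <= B ->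
  (forall m m', (m < k)%nat -> (m' < k)%nat -> g m <> 0 -> g m' <> 0 -> m = m') ->
  (forall m, (m < k)%nat -> Rabs (g m) <= B) -> fsum k (fun m => Rabs (g m)) <= B.
Proof. induction k; intros HB H1 H2; simpl; [lra|].
  destruct (Req_dec (g k) 0) as [E|E].
  - rewrite E, Rabs_R0, Rplus_0_r. apply IHk; auto; intros; first [ apply H1; auto; lia | apply H2; lia ].
  - rewrite fsum_zero'. rewrite Rplus_0_l; apply H2; lia.
    intros m Hm. destruct (Req_dec (g m) 0) as [E'|E'].
    + rewrite E', Rabs_R0; auto.
    + exfalso. assert (m = k) by (apply H1; auto; lia). lia. Qed.

Lemma fsum_mul_max d a b B : (forall j, (j < d)%nat -> Rabs (b j) <= B) ->
  Rabs (fsum d (fun j => a j * b j)) <= fsum d (fun j => Rabs (a j)) * B.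
Proof. intros H. eapply Rle_trans; [apply fsum_abs|]. rewrite Rmult_comm, <- fsum_scal.
  apply fsum_le. intros m Hm. rewrite Rabs_mult. specialize (H m Hm).
  rewrite Rmult_comm. apply Rmult_le_compat_r; auto. apply Rabs_pos. Qed.

Lemma fmax_nonneg k f : 0 <= fmax k f.
Proof. induction k; simpl; [lra|]. eapply Rle_trans; [exact IHk| apply Rmax_l]. Qed.

Lemma fmax_ge k f m : (m < k)%nat -> f m <= fmax k f.
Proof. induction k; intros H; [lia|]. simpl. destruct (Nat.eq_dec m k) as [->|Hn].
  apply Rmax_r. eapply Rle_trans; [apply IHk; lia| apply Rmax_l]. Qed.

Lemma fmax_le k f B : 0 <= B -> (forall m, (m < k)%nat -> f m <= B) -> fmax k f <= B.
Proof. induction k; intros HB H; simpl; [lra|]. apply Rmax_lub; [apply IHk|apply H]; auto. Qed.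

Lemma fsum_geom_eq k r : fsum k (fun p => r ^ p) * (r - 1) = r ^ k - 1.
Proof. induction k; simpl; [lra|]. rewrite Rmult_plus_distr_r, IHk. ring. Qed.

Lemma fsum_geom_gt1 k r : 1 < r -> fsum k (fun p => r ^ p) <= r ^ k / (r - 1).
Proof. intros H. pose proof (fsum_geom_eq k r).
  apply (Rmult_le_reg_r (r - 1)); [lra|]. unfold Rdiv. rewrite Rmult_assoc, Rinv_l by lra. lra. Qed.

Lemma fsum_geom_lt1 k r : 0 <= r < 1 -> fsum k (fun p => r ^ p) <= 1 / (1 - r).
Proof. intros H. pose proof (fsum_geom_eq k r).
  assert (0 <= r ^ k) by (apply pow_le; lra).
  apply (Rmult_le_reg_r (1 - r)); [lra|]. unfold Rdiv. rewrite Rmult_assoc, Rinv_l by lra. lra. Qed.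

Definition gp (L k : nat) : R := INR k / 2 ^ L.

Lemma pow2_pos L : 0 < 2 ^ L.
Proof. apply pow_lt; lra. Qed.

Lemma gp_le L a b : (a <= b)%nat -> gp L a <= gp L b.
Proof. intros H. unfold gp, Rdiv. apply Rmult_le_compat_r.
  left; apply Rinv_0_lt_compat, pow2_pos. apply le_INR; auto. Qed.

Lemma gp_lt L a b : (a < b)%nat -> gp L a < gp L b.
Proof. intros H. unfold gp, Rdiv. apply Rmult_lt_compat_r.
  apply Rinv_0_lt_compat, pow2_pos. apply lt_INR; auto. Qed.

Lemma gp_le_inv L a b : gp L a <= gp L b -> (a <= b)%nat.
Proof. intros H. destruct (le_lt_dec a b); auto. apply (gp_lt L) in l. lra. Qed.

Lemma gp_scale e p a : gp (e + p) (a * 2 ^ e) = INR a / 2 ^ p.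
Proof. unfold gp. rewrite mult_INR, pow_INR, pow_add. replace (INR 2) with 2 by (simpl; lra).
  field. split; apply pow_nonzero; lra. Qed.

Lemma gp_S L k : gp (S L) (2 * k) = gp L k.
Proof. unfold gp. rewrite mult_INR. replace (INR 2) with 2 by (simpl; lra).
  change (2 ^ S L) with (2 * 2 ^ L). field. apply pow_nonzero; lra. Qed.

Lemma gp_0 L : gp L 0 = 0.
Proof. unfold gp. simpl. lra. Qed.

Lemma gp_top L : gp L (2 ^ L) = 1.
Proof. unfold gp. rewrite pow_INR. replace (INR 2) with 2 by (simpl; lra). field. apply pow_nonzero; lra. Qed.

Lemma gp_nonneg L k : 0 <= gp L k.
Proof. unfold gp. apply Rmult_le_pos. apply pos_INR. left; apply Rinv_0_lt_compat, pow2_pos. Qed.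

Lemma gp_le1 L k : (k <= 2 ^ L)%nat -> gp L k <= 1.
Proof. intros H. rewrite <- (gp_top L). apply gp_le; auto. Qed.

Lemma gp_mid L k : gp (S L) (S (2 * k)) = (gp L k + gp L (S k)) / 2.
Proof. unfold gp. rewrite (S_INR (2*k)), mult_INR, (S_INR k). replace (INR 2) with 2 by (simpl; lra).
  change (2 ^ S L) with (2 * 2 ^ L). field. apply pow_nonzero; lra. Qed.

Lemma gp_Sk L k : gp L (S k) = gp L k + / 2 ^ L.
Proof. unfold gp. rewrite S_INR. field. apply pow_nonzero; lra. Qed.

Lemma gp_dich L q k : gp L q <= gp L k \/ gp L (S k) <= gp L q.
Proof. destruct (le_lt_dec q k). left; apply gp_le; auto. right; apply gp_le; lia. Qed.

Definition tent (a b c x : R) : R :=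
  if Rle_dec a x then if Rlt_dec x b then x - a else if Rlt_dec x c then c - x else 0 else 0.
Definition stent (a b c x : R) : R :=
  if Rle_dec a x then if Rlt_dec x b then 1 else if Rlt_dec x c then -1 else 0 else 0.

Lemma phi_tent p m x : (1 <= m)%nat -> phi p m x = 2 ^ p * tent (t0 p m) (t1 p m) (t2 p m) x.
Proof. intros H. destruct m; [lia|]. unfold phi, tent.
  destruct Rle_dec; [destruct Rlt_dec; [|destruct Rlt_dec]|]; ring. Qed.

Lemma chi_tent p m x : (1 <= m)%nat -> chi p m x = 2 ^ p * stent (t0 p m) (t1 p m) (t2 p m) x.
Proof. intros H. destruct m; [lia|]. unfold chi, stent.
  destruct Rle_dec; [destruct Rlt_dec; [|destruct Rlt_dec]|]; ring. Qed.

Lemma t_vals p m : (1 <= m)%nat ->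
  t0 p m = (INR m - 1) / 2 ^ p /\ t1 p m = t0 p m + / 2 ^ S p /\ t2 p m = t0 p m + 2 * / 2 ^ S p.
Proof. intros H. unfold t0, t1, t2. rewrite minus_INR by auto. simpl INR.
  assert (0 < 2 ^ p) by apply pow2_pos. simpl. repeat split; field; lra. Qed.

Lemma t2_eq p m : t2 p m = INR m / 2 ^ p.
Proof. reflexivity. Qed.

Lemma tent_lip a b c x y : b - a = c - b -> a < b ->
  Rabs (tent a b c x - tent a b c y) <= Rabs (x - y).
Proof. intros H1 H2. unfold tent.
  destruct (Rle_dec a x); [destruct (Rlt_dec x b); [|destruct (Rlt_dec x c)]|];
  destruct (Rle_dec a y); try (destruct (Rlt_dec y b); [|destruct (Rlt_dec y c)]); rabs. Qed.

Lemma tent_bounds a b c x : b - a = c - b -> a < b -> 0 <= tent a b c x <= b - a.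
Proof. intros. unfold tent. destruct (Rle_dec a x); [destruct (Rlt_dec x b); [|destruct (Rlt_dec x c)]|]; lra. Qed.

Lemma tent_nz a b c x : a < b -> b < c -> tent a b c x <> 0 -> a < x < c.
Proof. intros. unfold tent in *. destruct (Rle_dec a x); [destruct (Rlt_dec x b); [|destruct (Rlt_dec x c)]|]; lra. Qed.


Lemma stent_nz a b c x : a < b -> b < c -> stent a b c x <> 0 -> a <= x < c.
Proof. intros. unfold stent in *. destruct (Rle_dec a x); [destruct (Rlt_dec x b); [|destruct (Rlt_dec x c)]|]; lra. Qed.

Lemma stent_abs a b c x : Rabs (stent a b c x) <= 1.
Proof. unfold stent. destruct (Rle_dec a x); [destruct (Rlt_dec x b); [|destruct (Rlt_dec x c)]|]; rabs. Qed.

Lemma tent_zero_out a b c x : a < b -> b < c -> (x <= a \/ c <= x) -> tent a b c x = 0.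
Proof. intros. unfold tent. destruct (Rle_dec a x); [destruct (Rlt_dec x b); [|destruct (Rlt_dec x c)]|]; lra. Qed.

Lemma tent_mid a b c : b - a = c - b -> a < b -> tent a b c b = b - a.
Proof. intros. unfold tent. destruct (Rle_dec a b); [destruct (Rlt_dec b b); [|destruct (Rlt_dec b c)]|]; lra. Qed.

Lemma tent_aff a b c u v : b - a = c - b -> a < b -> u < v ->
  (v <= a \/ (a <= u /\ v <= b) \/ (b <= u /\ v <= c) \/ c <= u) ->
  exists s0 s, (forall x, u <= x <= v -> tent a b c x = s0 + s * x) /\
               (forall x, u < x < v -> stent a b c x = s).
Proof. intros H1 H2 H3 H4. unfold tent, stent.
  destruct H4 as [H|[H|[H|H]]].
  - exists 0, 0; split; intros x Hx;
    (destruct (Rle_dec a x); [destruct (Rlt_dec x b); [|destruct (Rlt_dec x c)]|]); lra.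
  - exists (- a), 1; split; intros x Hx;
    (destruct (Rle_dec a x); [destruct (Rlt_dec x b); [|destruct (Rlt_dec x c)]|]); lra.
  - exists c, (-1); split; intros x Hx;
    (destruct (Rle_dec a x); [destruct (Rlt_dec x b); [|destruct (Rlt_dec x c)]|]); lra.
  - exists 0, 0; split; intros x Hx;
    (destruct (Rle_dec a x); [destruct (Rlt_dec x b); [|destruct (Rlt_dec x c)]|]); lra.
Qed.

Lemma t_props p m : (1 <= m)%nat ->
  t0 p m < t1 p m < t2 p m /\ t1 p m - t0 p m = t2 p m - t1 p m /\ t1 p m - t0 p m = / 2 ^ S p.
Proof. intros H. destruct (t_vals p m H) as [E0 [E1 E2]].
  assert (0 < / 2 ^ S p) by (apply Rinv_0_lt_compat, pow2_pos).
  rewrite E1, E2. repeat split; lra. Qed.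

Lemma P_half p : 2 ^ p * / 2 ^ S p = / 2.
Proof. change (2 ^ S p) with (2 * 2 ^ p). field. apply pow_nonzero; lra. Qed.

Lemma phi_lip p m x y : Rabs (phi p m x - phi p m y) <= 2 ^ p * Rabs (x - y).
Proof. destruct m as [|m'].
  - destruct p; simpl. lra. rewrite Rminus_0_r, Rabs_R0.
    apply Rmult_le_pos; [left; exact (pow2_pos (S p))| apply Rabs_pos].
  - rewrite !phi_tent by lia. rewrite <- Rmult_minus_distr_l, Rabs_mult, Rabs_right.
    2: apply Rle_ge, pow_le; lra.
    apply Rmult_le_compat_l; [apply pow_le; lra|].
    destruct (t_props p (S m')) as [[Ha Hb] [Hc Hd]]; [lia|].
    apply tent_lip; lra. Qed.

Lemma phi_bounds p m x : (1 <= m)%nat -> 0 <= phi p m x <= / 2.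
Proof. intros H. rewrite phi_tent by auto.
  destruct (t_props p m H) as [[Ha Hb] [Hc Hd]].
  pose proof (tent_bounds (t0 p m) (t1 p m) (t2 p m) x Hc Ha).
  pose proof (pow2_pos p). rewrite <- (P_half p), <- Hd. split.
  apply Rmult_le_pos; lra. apply Rmult_le_compat_l; lra. Qed.

Lemma chi_abs p m x : Rabs (chi p m x) <= 2 ^ p.
Proof. destruct m as [|m'].
  - destruct p; simpl; rabs. pose proof (pow2_pos p). lra.
  - rewrite chi_tent by lia. rewrite Rabs_mult, Rabs_right by (apply Rle_ge, pow_le; lra).
    pose proof (stent_abs (t0 p (S m')) (t1 p (S m')) (t2 p (S m')) x).
    pose proof (pow2_pos p). rewrite <- (Rmult_1_r (2 ^ p)) at 2. apply Rmult_le_compat_l; lra. Qed.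

Lemma phi_supp p m x : (1 <= m)%nat -> phi p m x <> 0 -> t0 p m < x < t2 p m.
Proof. intros H H1. rewrite phi_tent in H1 by auto.
  destruct (t_props p m H) as [[Ha Hb] [Hc Hd]].
  apply (tent_nz _ (t1 p m)); auto. intro E; apply H1; rewrite E; ring. Qed.

Lemma chi_supp p m x : (1 <= m)%nat -> chi p m x <> 0 -> t0 p m <= x < t2 p m.
Proof. intros H H1. rewrite chi_tent in H1 by auto.
  destruct (t_props p m H) as [[Ha Hb] [Hc Hd]].
  apply (stent_nz _ (t1 p m)); auto. intro E; apply H1; rewrite E; ring. Qed.

Lemma supp_unique p m m' x : (1 <= m)%nat -> (1 <= m')%nat ->
  t0 p m <= x < t2 p m -> t0 p m' <= x < t2 p m' -> m = m'.
Proof. intros H H' [A1 A2] [B1 B2].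
  destruct (t_vals p m H) as [E0 _]. destruct (t_vals p m' H') as [E0' _].
  rewrite E0 in A1. rewrite E0' in B1. rewrite t2_eq in A2, B2.
  pose proof (pow2_pos p).
  assert (INR m - 1 < INR m') as C1.
  { apply (Rmult_lt_reg_r (/ 2 ^ p)). apply Rinv_0_lt_compat; lra.
    unfold Rdiv in *. lra. }
  assert (INR m' - 1 < INR m) as C2.
  { apply (Rmult_lt_reg_r (/ 2 ^ p)). apply Rinv_0_lt_compat; lra.
    unfold Rdiv in *. lra. }
  assert (m < S m')%nat. { apply INR_lt. rewrite S_INR. lra. }
  assert (m' < S m)%nat. { apply INR_lt. rewrite S_INR. lra. }
  lia. Qed.

Lemma t0_gp p m : t0 p m = gp p (m - 1).
Proof. reflexivity. Qed.
Lemma t2_gp p m : t2 p m = gp p m.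
Proof. reflexivity. Qed.

Lemma gp_lift L p k : (L <= p)%nat -> gp L k = gp p (k * 2 ^ (p - L)).
Proof. intros H. replace p with ((p - L) + L)%nat at 1 by lia. rewrite gp_scale. reflexivity. Qed.

Lemma t1_gp p m : (1 <= m)%nat -> t1 p m = gp (S p) (2 * m - 1).
Proof. intros H. unfold t1, gp. rewrite minus_INR by lia. rewrite mult_INR.
  replace (INR 2) with 2 by (simpl; lra). simpl INR. reflexivity. Qed.

Definition PA (L : nat) (f df : R -> R) : Prop := forall k, (k < 2 ^ L)%nat -> exists s,
  (forall x, gp L k <= x <= gp L (S k) -> f x = f (gp L k) + s * (x - gp L k)) /\
  (forall x, gp L k < x < gp L (S k) -> df x = s).

Lemma PA_ext L f df f' df' : (forall x, f x = f' x) -> (forall x, df x = df' x) ->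
  PA L f df -> PA L f' df'.
Proof. intros E1 E2 H k Hk. destruct (H k Hk) as [s [H1 H2]]. exists s. split; intros x Hx.
  rewrite <- !E1; auto. rewrite <- E2; auto. Qed.

Lemma PA_plus L f df g dg : PA L f df -> PA L g dg ->
  PA L (fun x => f x + g x) (fun x => df x + dg x).
Proof. intros Hf Hg k Hk. destruct (Hf k Hk) as [s [H1 H2]]. destruct (Hg k Hk) as [s' [H1' H2']].
  exists (s + s'). split; intros x Hx. rewrite H1, H1' by auto. ring. rewrite H2, H2'; auto. Qed.

Lemma PA_scal L c f df : PA L f df -> PA L (fun x => c * f x) (fun x => c * df x).
Proof. intros Hf k Hk. destruct (Hf k Hk) as [s [H1 H2]].
  exists (c * s). split; intros x Hx. rewrite H1 by auto. ring. rewrite H2; auto. Qed.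

Lemma PA_const L c : PA L (fun _ => c) (fun _ => 0).
Proof. intros k Hk. exists 0. split; intros; ring. Qed.

Lemma PA_fsum L N h dh : (forall m, (m < N)%nat -> PA L (h m) (dh m)) ->
  PA L (fun x => fsum N (fun m => h m x)) (fun x => fsum N (fun m => dh m x)).
Proof. induction N; intros H.
  - simpl. apply PA_const.
  - simpl. apply (PA_plus L (fun x => fsum N (fun m => h m x)) _ (h N) (dh N)).
    apply IHN; intros; apply H; lia. apply H; lia. Qed.

Lemma PA_mono L f df : PA L f df -> PA (S L) f df.
Proof. intros H k Hk. assert (k / 2 < 2 ^ L)%nat as Hk'.
  { simpl in Hk. apply Nat.Div0.div_lt_upper_bound. lia. }
  destruct (H _ Hk') as [s [H1 H2]].
  assert ((2 * (k / 2) <= k /\ S k <= 2 * S (k / 2))%nat) as [Q1 Q2].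
  { pose proof (Nat.div_mod k 2). pose proof (Nat.mod_upper_bound k 2). lia. }
  assert (gp L (k/2) <= gp (S L) k) as G1. { rewrite <- gp_S. apply gp_le; auto. }
  assert (gp (S L) (S k) <= gp L (S (k/2))) as G2. { rewrite <- (gp_S L (S (k/2))). apply gp_le; auto. }
  pose proof (gp_lt (S L) k (S k) ltac:(lia)).
  exists s. split; intros x Hx.
  - rewrite (H1 x) by lra. rewrite (H1 (gp (S L) k)) by lra. ring.
  - apply H2. lra. Qed.

Lemma PA_le L L' f df : (L <= L')%nat -> PA L f df -> PA L' f df.
Proof. intros H. induction H; auto. intros; apply PA_mono; auto. Qed.

Lemma PA_mid L f df k : PA L f df -> (k < 2 ^ L)%nat ->
  f (gp (S L) (S (2 * k))) = (f (gp L k) + f (gp L (S k))) / 2.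
Proof. intros H Hk. destruct (H k Hk) as [s [H1 _]].
  pose proof (gp_lt L k (S k) ltac:(lia)). rewrite gp_mid.
  rewrite (H1 ((gp L k + gp L (S k)) / 2)) by lra. rewrite (H1 (gp L (S k))) by lra. field. Qed.

Lemma PA_hat L p m : (S p <= L)%nat -> PA L (phi p m) (chi p m).
Proof. intros HL k Hk. destruct m as [|m'].
  - destruct p.
    + exists 1. split; intros; simpl; ring.
    + exists 0. split; intros; simpl; ring.
  - destruct (t_props p (S m')) as [[Ha Hb] [Hc Hd]]; [lia|].
    assert (Huv : gp L k < gp L (S k)) by (apply gp_lt; lia).
    assert (D0 : t0 p (S m') <= gp L k \/ gp L (S k) <= t0 p (S m')).
    { change (t0 p (S m')) with (gp p (S m' - 1)). rewrite (gp_lift p L) by lia. apply gp_dich. }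
    assert (D1 : t1 p (S m') <= gp L k \/ gp L (S k) <= t1 p (S m')).
    { rewrite t1_gp, (gp_lift (S p) L) by lia. apply gp_dich. }
    assert (D2 : t2 p (S m') <= gp L k \/ gp L (S k) <= t2 p (S m')).
    { change (t2 p (S m')) with (gp p (S m')). rewrite (gp_lift p L) by lia. apply gp_dich. }
    destruct (tent_aff (t0 p (S m')) (t1 p (S m')) (t2 p (S m')) (gp L k) (gp L (S k)))
      as [s0 [s [T1 T2]]]; auto.
    { destruct D0, D1, D2; lra. }
    exists (2 ^ p * s). split; intros x Hx.
    + rewrite !phi_tent by lia. rewrite T1, T1 by lra. ring.
    + rewrite chi_tent by lia. rewrite T2; auto. Qed.

Lemma PA_Delta L f p : (S p <= L)%nat -> PA L (Delta f p) (dDelta f p).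
Proof. intros H. unfold Delta, dDelta.
  apply (PA_fsum L _ (fun m x => coef f p m * phi p m x) (fun m x => coef f p m * chi p m x)).
  intros m _. apply PA_scal, PA_hat; auto. Qed.

Lemma PA_SS L f n : (n <= L)%nat -> PA L (SS f n) (dSS f n).
Proof. induction n; intros H.
  - apply (PA_ext L (fun _ => f 0) (fun _ => 0)); auto. apply PA_const.
  - apply (PA_ext L (fun x => SS f n x + Delta f n x) (fun x => dSS f n x + dDelta f n x)); auto.
    apply PA_plus. apply IHn; lia. apply PA_Delta; lia. Qed.

Lemma phi_grid0 L p m k : (L <= p)%nat -> (1 <= m)%nat -> phi p m (gp L k) = 0.
Proof. intros H H1. rewrite phi_tent by auto.
  destruct (t_props p m H1) as [[Ha Hb] [Hc Hd]].
  rewrite tent_zero_out; auto; [ring|].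
  rewrite (gp_lift L p) by auto. change (t0 p m) with (gp p (m-1)). change (t2 p m) with (gp p m).
  destruct (gp_dich p (k * 2 ^ (p - L)) (m - 1)) as [E|E]; [left; auto|right].
  replace (S (m - 1)) with m in E by lia. auto. Qed.

Lemma phi_p0 p x : (1 <= p)%nat -> phi p 0 x = 0.
Proof. intros H. destruct p; [lia|]. reflexivity. Qed.
Lemma chi_p0 p x : (1 <= p)%nat -> chi p 0 x = 0.
Proof. intros H. destruct p; [lia|]. reflexivity. Qed.

Lemma Delta_grid0 f p L k : (1 <= p)%nat -> (L <= p)%nat -> Delta f p (gp L k) = 0.
Proof. intros H1 H2. unfold Delta. apply fsum_zero'. intros m Hm. destruct m.
  rewrite phi_p0 by auto; ring. rewrite phi_grid0 by lia; ring. Qed.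

Lemma phi_mid p m : (1 <= m)%nat -> phi p m (t1 p m) = / 2.
Proof. intros H. rewrite phi_tent by auto.
  destruct (t_props p m H) as [[Ha Hb] [Hc Hd]].
  rewrite tent_mid by auto. rewrite Hd. apply P_half. Qed.


Lemma phi_mid_other p m m' : (1 <= p)%nat -> (1 <= m)%nat -> m' <> m -> phi p m' (t1 p m) = 0.
Proof. intros Hp H H'. destruct (Req_dec (phi p m' (t1 p m)) 0) as [E|E]; auto.
  destruct m' as [|m'']. rewrite phi_p0 by auto; auto.
  exfalso. apply H'. apply (supp_unique p (S m'') m (t1 p m)); try lia.
  pose proof (phi_supp p (S m'') _ ltac:(lia) E). lra.
  destruct (t_props p m H) as [[Ha Hb] _]. lra. Qed.

Lemma Delta_mid f p m : (1 <= p)%nat -> (1 <= m <= 2 ^ p)%nat -> Delta f p (t1 p m) = coef f p m / 2.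
Proof. intros Hp Hm. unfold Delta. rewrite (fsum_single _ _ m) by (try lia; intros; rewrite phi_mid_other by lia; ring).
  rewrite phi_mid by lia. field. Qed.

Lemma Delta0_eq f x : Delta f 0 x = coef f 0 0 * x + coef f 0 1 * phi 0 1 x.
Proof. unfold Delta. simpl. ring. Qed.

Lemma t0_01 : t0 0 1 = 0. Proof. unfold t0. simpl. lra. Qed.
Lemma t1_01 : t1 0 1 = / 2. Proof. unfold t1. simpl. lra. Qed.
Lemma t2_01 : t2 0 1 = 1. Proof. unfold t2. simpl. lra. Qed.


Lemma phi01_val x : phi 0 1 x = tent 0 (/2) 1 x.
Proof. rewrite phi_tent by lia. rewrite t0_01, t1_01, t2_01. simpl. ring. Qed.

Lemma Delta_at0 f p : Delta f p 0 = 0.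
Proof. destruct p.
  - rewrite Delta0_eq, phi01_val. rewrite tent_zero_out by lra. ring.
  - pose proof (Delta_grid0 f (S p) 0 0 ltac:(lia) ltac:(lia)) as E. rewrite gp_0 in E. exact E. Qed.


Lemma SS_interp f n k : (1 <= n)%nat -> (k <= 2 ^ n)%nat -> SS f n (gp n k) = f (gp n k).
Proof. revert k. induction n as [|n IH]; intros k Hn Hk; [lia|].
  destruct (Nat.eq_dec n 0) as [->|Hn0].
  - simpl SS. rewrite Delta0_eq, phi01_val. unfold coef. rewrite t0_01, t1_01, t2_01.
    simpl in Hk. assert ((k = 0 \/ k = 1 \/ k = 2)%nat) as [ -> | [ -> | -> ]] by lia;
    unfold gp; simpl; unfold tent;
    [ replace (0 / (2 * 1)) with 0 by field
    | replace (1 / (2 * 1)) with (/ 2) by field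
    | replace ((1 + 1) / (2 * 1)) with 1 by field ];
    repeat (destruct Rle_dec; try lra); repeat (destruct Rlt_dec; try lra).
  - simpl SS. destruct (Nat.even k) eqn:Ev.
    + apply Nat.even_spec in Ev. destruct Ev as [k' ->].
      rewrite gp_S. rewrite IH by (simpl in Hk; lia). rewrite Delta_grid0 by lia. ring.
    + assert ((exists m, k = 2 * m - 1 /\ 1 <= m <= 2 ^ n)%nat) as [m [-> Hm]].
      { exists (S (k / 2)). pose proof (Nat.div_mod k 2). pose proof (Nat.mod_upper_bound k 2).
        assert (k mod 2 <> 0)%nat.
        { intro E.
          assert (Nat.even k = true). { apply Nat.even_spec. exists (k/2)%nat. lia. } congruence. }
        simpl in Hk. split; [lia|]. split; [lia|]. 
        assert (k <> 2 * 2 ^ n)%nat. { intro E. assert (Nat.even k = true).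
          { apply Nat.even_spec. exists (2 ^ n)%nat. lia. } congruence. }
        lia. }
      rewrite <- t1_gp by lia. rewrite Delta_mid by lia.
      assert (PA n (SS f n) (dSS f n)) as HPA by (apply PA_SS; lia).
      pose proof (PA_mid n _ _ (m - 1) HPA ltac:(lia)) as HM.
      replace (S (2 * (m - 1))) with (2 * m - 1)%nat in HM by lia.
      rewrite <- t1_gp in HM by lia. rewrite HM.
      rewrite !IH by lia. replace (S (m - 1)) with m by lia.
      unfold coef. destruct m; [lia|]. change (gp n (S m - 1)) with (t0 n (S m)). change (gp n (S m)) with (t2 n (S m)). lra. Qed.

Lemma SS_diff f n x y : SS f n x - SS f n y = fsum n (fun p => Delta f p x - Delta f p y).
Proof. induction n; simpl; [lra|]. rewrite <- IHn. ring. Qed.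

Lemma phi_abs_le p m x : (1 <= m)%nat -> Rabs (phi p m x) <= / 2.
Proof. intros H. destruct (phi_bounds p m x H). rewrite Rabs_right; lra. Qed.

Lemma phi_unique p m m' x : (1 <= p)%nat -> phi p m x <> 0 -> phi p m' x <> 0 -> m = m'.
Proof. intros Hp H1 H2. destruct m. rewrite phi_p0 in H1 by auto; lra.
  destruct m'. rewrite phi_p0 in H2 by auto; lra.
  apply (supp_unique p (S m) (S m') x); try lia.
  pose proof (phi_supp p (S m) x ltac:(lia) H1); lra.
  pose proof (phi_supp p (S m') x ltac:(lia) H2); lra. Qed.

Lemma chi_unique p m m' x : (1 <= p)%nat -> chi p m x <> 0 -> chi p m' x <> 0 -> m = m'.
Proof. intros Hp H1 H2. destruct m. rewrite chi_p0 in H1 by auto; lra.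
  destruct m'. rewrite chi_p0 in H2 by auto; lra.
  apply (supp_unique p (S m) (S m') x); try lia.
  apply (chi_supp p (S m) x ltac:(lia) H1). apply (chi_supp p (S m') x ltac:(lia) H2). Qed.

Lemma sum_phi p x : 0 <= x <= 1 -> fsum (S (2 ^ p)) (fun m => Rabs (phi p m x)) <= 2.
Proof. intros Hx. destruct p.
  - replace (fsum (S (2^0)) (fun m => Rabs (phi 0 m x))) with (Rabs (phi 0 0 x) + Rabs (phi 0 1 x)) by (simpl; ring).
    change (phi 0 0 x) with x. pose proof (phi_abs_le 0 1 x ltac:(lia)). rabs.
  - eapply Rle_trans; [apply (fsum_unique _ _ (/ 2))|]; try lra.
    + intros m m' _ _ H1 H2. apply (phi_unique (S p) m m' x); auto; lia.
    + intros m _. destruct m. rewrite phi_p0 by lia. rewrite Rabs_R0; lra. apply phi_abs_le; lia. Qed.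

Lemma sum_chi p x : fsum (S (2 ^ p)) (fun m => Rabs (chi p m x)) <= 2 * 2 ^ p.
Proof. destruct p.
  - replace (fsum (S (2^0)) (fun m => Rabs (chi 0 m x))) with (Rabs (chi 0 0 x) + Rabs (chi 0 1 x)) by (simpl; ring).
    change (chi 0 0 x) with 1. pose proof (chi_abs 0 1 x) as H. change (2 ^ 0) with 1 in *. rabs.
  - pose proof (pow2_pos (S p)).
    eapply Rle_trans; [apply (fsum_unique _ _ (2 ^ S p))|]; try lra.
    + intros m m' _ _ H1 H2. apply (chi_unique (S p) m m' x); auto; lia.
    + intros m _. apply chi_abs. Qed.

Lemma sum_phi_diff p x y : fsum (S (2 ^ p)) (fun m => Rabs (phi p m x - phi p m y)) <= 2 * 2 ^ p * Rabs (x - y).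
Proof. destruct p.
  - replace (fsum (S (2^0)) (fun m => Rabs (phi 0 m x - phi 0 m y))) with (Rabs (phi 0 0 x - phi 0 0 y) + Rabs (phi 0 1 x - phi 0 1 y)) by (simpl; ring).
    change (phi 0 0 x) with x. change (phi 0 0 y) with y. pose proof (phi_lip 0 1 x y) as H. change (2 ^ 0) with 1 in *. lra.
  - set (u := fun m => if Req_EM_T (phi (S p) m x) 0 then 0 else phi (S p) m x - phi (S p) m y).
    set (w := fun m => if Req_EM_T (phi (S p) m x) 0 then phi (S p) m x - phi (S p) m y else 0).
    assert (E : forall m, Rabs (phi (S p) m x - phi (S p) m y) <= Rabs (u m) + Rabs (w m)).
    { intros m. unfold u, w. destruct Req_EM_T; rewrite Rabs_R0; lra. }
    eapply Rle_trans. apply (fsum_le _ _ (fun m => Rabs (u m) + Rabs (w m))). intros; apply E.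
    rewrite fsum_plus. pose proof (Rabs_pos (x - y)). pose proof (pow2_pos (S p)).
    assert (fsum (S (2 ^ S p)) (fun m => Rabs (u m)) <= 2 ^ S p * Rabs (x - y)).
    { apply fsum_unique. apply Rmult_le_pos; lra.
      - intros m m' _ _. unfold u. destruct Req_EM_T; [intros K; lra|]. destruct Req_EM_T; [intros _ K; lra|].
        intros; apply (phi_unique (S p) m m' x); auto; lia.
      - intros m _. unfold u. destruct Req_EM_T. rewrite Rabs_R0. apply Rmult_le_pos; lra. apply phi_lip. }
    assert (fsum (S (2 ^ S p)) (fun m => Rabs (w m)) <= 2 ^ S p * Rabs (x - y)).
    { apply fsum_unique. apply Rmult_le_pos; lra.
      - intros m m' _ _. unfold w. destruct Req_EM_T as [E1|]; [|intros K; lra]. destruct Req_EM_T as [E2|]; [|intros _ K; lra].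
        rewrite E1, E2. intros K1 K2. apply (phi_unique (S p) m m' y); auto; try lia; intro; apply K1 || apply K2; lra.
      - intros m _. unfold w. destruct Req_EM_T. apply phi_lip. rewrite Rabs_R0. apply Rmult_le_pos; lra. }
    lra. Qed.

Lemma rowsum_gen d M (c : nat -> nat -> R) (h : nat -> R) B :
  (forall m, (m < M)%nat -> fsum d (fun j => Rabs (c j m)) <= B) ->
  fsum d (fun j => Rabs (fsum M (fun m => c j m * h m))) <= B * fsum M (fun m => Rabs (h m)).
Proof. intros H. eapply Rle_trans. apply fsum_le. intros j _. apply fsum_abs.
  rewrite fsum_swap. rewrite <- fsum_scal. apply fsum_le. intros m Hm.
  rewrite (fsum_ext _ _ (fun j => Rabs (c j m) * Rabs (h m))) by (intros; apply Rabs_mult).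
  rewrite (fsum_ext _ _ (fun j => Rabs (h m) * Rabs (c j m))) by (intros; ring).
  rewrite fsum_scal. rewrite Rmult_comm. apply Rmult_le_compat_r. apply Rabs_pos. auto. Qed.

Definition CB d (F : nat -> R -> R) p B := forall m, (m <= 2 ^ p)%nat -> fsum d (fun j => Rabs (coef (F j) p m)) <= B.

Lemma RS_Delta d F p B x : CB d F p B -> 0 <= x <= 1 -> 0 <= B ->
  fsum d (fun j => Rabs (Delta (F j) p x)) <= 2 * B.
Proof. intros H Hx HB. unfold Delta.
  eapply Rle_trans. apply (rowsum_gen d _ (fun j m => coef (F j) p m) (fun m => phi p m x) B).
  intros; apply H; lia. pose proof (sum_phi p x Hx). nra. Qed.

Lemma RS_Delta_diff d F p B x y : CB d F p B -> 0 <= B ->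
  fsum d (fun j => Rabs (Delta (F j) p x - Delta (F j) p y)) <= B * (2 * 2 ^ p * Rabs (x - y)).
Proof. intros H HB. unfold Delta.
  rewrite (fsum_ext d _ (fun j => Rabs (fsum (S (2 ^ p)) (fun m => coef (F j) p m * (phi p m x - phi p m y))))).
  2: { intros j _. rewrite <- fsum_minus. f_equal. apply fsum_ext. intros; ring. }
  eapply Rle_trans. apply (rowsum_gen d _ (fun j m => coef (F j) p m) (fun m => phi p m x - phi p m y) B).
  intros; apply H; lia. apply Rmult_le_compat_l; auto. apply sum_phi_diff. Qed.

Lemma RS_dDelta d F p B x : CB d F p B -> 0 <= B ->
  fsum d (fun j => Rabs (dDelta (F j) p x)) <= B * (2 * 2 ^ p).
Proof. intros H HB. unfold dDelta.
  eapply Rle_trans. apply (rowsum_gen d _ (fun j m => coef (F j) p m) (fun m => chi p m x) B).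
  intros; apply H; lia. apply Rmult_le_compat_l; auto. apply sum_chi. Qed.

Definition CB1 (f : R -> R) p B := forall m, (m <= 2 ^ p)%nat -> Rabs (coef f p m) <= B.

Lemma CB1_CB f p B : CB1 f p B -> CB 1 (fun _ => f) p B.
Proof. intros H m Hm. simpl. rewrite Rplus_0_l. auto. Qed.

Lemma Delta_bound f p B x : CB1 f p B -> 0 <= x <= 1 -> 0 <= B -> Rabs (Delta f p x) <= 2 * B.
Proof. intros H Hx HB. pose proof (RS_Delta 1 (fun _ => f) p B x (CB1_CB f p B H) Hx HB). simpl in H0. lra. Qed.

Lemma dDelta_bound f p B x : CB1 f p B -> 0 <= B -> Rabs (dDelta f p x) <= B * (2 * 2 ^ p).
Proof. intros H HB. pose proof (RS_dDelta 1 (fun _ => f) p B x (CB1_CB f p B H) HB). simpl in H0. lra. Qed.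

Lemma Delta_lip f p B x y : CB1 f p B -> 0 <= B -> Rabs (Delta f p x - Delta f p y) <= B * (2 * 2 ^ p * Rabs (x - y)).
Proof. intros H HB. pose proof (RS_Delta_diff 1 (fun _ => f) p B x y (CB1_CB f p B H) HB). simpl in H0. lra. Qed.

Lemma SS_expand f n x : SS f n x = f 0 + fsum n (fun p => Delta f p x).
Proof. induction n; simpl; [lra|]. rewrite IHn; ring. Qed.

Lemma dSS_expand f n x : dSS f n x = fsum n (fun p => dDelta f p x).
Proof. induction n; simpl; [lra|]. rewrite IHn; ring. Qed.

Section Rho.
Variable rho : R.
Hypothesis Hrho : 1 < rho < 2.

Lemma rho_pos : 0 < rho. Proof. lra. Qed.

Lemma geom_inv n : fsum n (fun p => / rho ^ p) <= 1 / (1 - / rho).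
Proof. rewrite (fsum_ext _ _ (fun p => (/ rho) ^ p)) by (intros; rewrite pow_inv; auto).
  apply fsum_geom_lt1. split. left; apply Rinv_0_lt_compat; lra.
  rewrite <- Rinv_1. apply Rinv_lt_contravar; lra. Qed.

Lemma geom_up n : fsum n (fun p => 2 ^ p / rho ^ p) <= (2 / rho) ^ n / (2 / rho - 1).
Proof. rewrite (fsum_ext _ _ (fun p => (2 / rho) ^ p)).
  apply fsum_geom_gt1. apply (Rmult_lt_reg_r rho); [lra|]. unfold Rdiv; rewrite Rmult_assoc, Rinv_l; lra.
  intros. unfold Rdiv. rewrite Rpow_mult_distr, pow_inv. auto. Qed.

Lemma inv_rho_pow_pos n : 0 < / rho ^ n.
Proof. apply Rinv_0_lt_compat, pow_lt; lra. Qed.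

Lemma two_rho_gt1 : 1 < 2 / rho.
Proof. apply (Rmult_lt_reg_r rho); [lra|]. unfold Rdiv; rewrite Rmult_assoc, Rinv_l; lra. Qed.

Definition FH d (F : nat -> R -> R) K :=
  fsum d (fun j => Rabs (F j 0)) <= rho * K /\ forall p, CB d F p (K / rho ^ p).

Definition Hc := 1 + 2 / (2 / rho - 1).
Definition Vc := rho + 2 / (1 - / rho).

Lemma Hc_pos : 1 <= Hc.
Proof. unfold Hc. pose proof two_rho_gt1. assert (0 < 2 / (2/rho - 1)) by (apply Rdiv_lt_0_compat; lra). lra. Qed.

Lemma Vc_pos : 0 < Vc.
Proof. unfold Vc. assert (/ rho < 1) by (rewrite <- Rinv_1; apply Rinv_lt_contravar; lra).
  assert (0 < 2 / (1 - / rho)) by (apply Rdiv_lt_0_compat; lra). lra. Qed.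

Lemma FH_K d F K : FH d F K -> (0 < d)%nat -> 0 <= K.
Proof. intros [H1 _] Hd. assert (0 <= fsum d (fun j => Rabs (F j 0))) by (apply fsum_nonneg; intros; apply Rabs_pos).
  nra. Qed.

Lemma FH_Kp d F K p : FH d F K -> 0 <= K -> 0 <= K / rho ^ p.
Proof. intros _ HK. unfold Rdiv. apply Rmult_le_pos; auto. left; apply inv_rho_pow_pos. Qed.

Lemma HC_adj d F K n k : FH d F K -> 0 <= K -> (k < 2 ^ n)%nat ->
  fsum d (fun j => Rabs (F j (gp n (S k)) - F j (gp n k))) <= Hc * K / rho ^ n.
Proof. intros [H0 H] HK Hk. pose proof Hc_pos as Hc1. pose proof (inv_rho_pow_pos n).
  destruct n.
  - simpl in Hk. assert (k = 0)%nat by lia. subst. unfold gp. simpl.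
    replace (1 / 1) with 1 by lra. replace (0 / 1) with 0 by lra.
    specialize (H 0%nat 0%nat ltac:(simpl; lia)). simpl in H. unfold coef in H.
    replace (K / 1) with K in H by field. replace (Hc * K / 1) with (Hc * K) by field.
    apply Rle_trans with K. lra. rewrite <- (Rmult_1_l K) at 1. apply Rmult_le_compat_r; lra.
  - rewrite (fsum_ext d _ (fun j => Rabs (fsum (S n) (fun p => Delta (F j) p (gp (S n) (S k)) - Delta (F j) p (gp (S n) k))))).
    2: { intros j _. rewrite <- (SS_interp (F j) (S n) (S k)), <- (SS_interp (F j) (S n) k) by lia. rewrite SS_diff. auto. }
    eapply Rle_trans. apply fsum_le. intros j _. apply fsum_abs.
    rewrite fsum_swap.
    eapply Rle_trans. apply fsum_le. intros p _. apply (RS_Delta_diff d F p (K / rho ^ p)). apply H. unfold Rdiv; apply Rmult_le_pos; [auto| left; apply inv_rho_pow_pos].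
    rewrite gp_Sk. replace (gp (S n) k + / 2 ^ S n - gp (S n) k) with (/ 2 ^ S n) by ring.
    rewrite Rabs_right by (left; apply Rinv_0_lt_compat, pow2_pos).
    rewrite (fsum_ext _ _ (fun p => (2 * K * / 2 ^ S n) * (2 ^ p / rho ^ p))) by (intros; unfold Rdiv; ring).
    rewrite fsum_scal. pose proof (geom_up (S n)) as GU. pose proof (pow2_pos (S n)). pose proof two_rho_gt1.
    assert (0 <= 2 * K * / 2 ^ S n) by (apply Rmult_le_pos; [lra| left; apply Rinv_0_lt_compat; lra]).
    eapply Rle_trans. apply Rmult_le_compat_l. auto. apply GU.
    unfold Rdiv. rewrite Rpow_mult_distr, pow_inv.
    replace (2 * K * / 2 ^ S n * (2 ^ S n * / rho ^ S n * / (2 * / rho - 1))) with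
      (2 * / (2 * / rho - 1) * K * / rho ^ S n) by (field; repeat split; try apply pow_nonzero; lra).
    apply Rmult_le_compat_r; [lra|]. apply Rmult_le_compat_r; auto. unfold Hc, Rdiv. lra. Qed.
End Rho.

Section Rho2.
Variable rho : R.
Hypothesis Hrho : 1 < rho < 2.

Lemma Kp_nonneg K p : 0 <= K -> 0 <= K / rho ^ p.
Proof. intros HK. unfold Rdiv. apply Rmult_le_pos; auto. left; apply inv_rho_pow_pos; auto. Qed.

Lemma inv_rho_lt1 : / rho < 1.
Proof. rewrite <- Rinv_1; apply Rinv_lt_contravar; lra. Qed.

Lemma sum_Delta_bound d F K n x : (forall p, CB d F p (K / rho ^ p)) -> 0 <= K -> 0 <= x <= 1 ->
  fsum n (fun p => fsum d (fun j => Rabs (Delta (F j) p x))) <= 2 * K / (1 - / rho).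
Proof. intros H HK Hx. eapply Rle_trans. apply fsum_le. intros p _. apply (RS_Delta d F p (K / rho ^ p)); auto.
  apply Kp_nonneg; auto.
  rewrite (fsum_ext _ _ (fun p => (2 * K) * / rho ^ p)) by (intros; unfold Rdiv; ring).
  rewrite fsum_scal. pose proof (geom_inv rho Hrho n). pose proof inv_rho_lt1.
  unfold Rdiv in *. rewrite Rmult_1_l in H0. apply Rmult_le_compat_l; lra. Qed.

Lemma HC_sup0 d F K n k : FH rho d F K -> 0 <= K -> (1 <= n)%nat -> (k <= 2 ^ n)%nat ->
  fsum d (fun j => Rabs (F j (gp n k) - F j 0)) <= 2 * K / (1 - / rho).
Proof. intros [H0 H] HK Hn Hk.
  rewrite (fsum_ext d _ (fun j => Rabs (fsum n (fun p => Delta (F j) p (gp n k))))).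
  2: { intros j _. rewrite <- (SS_interp (F j) n k) by lia. rewrite SS_expand. f_equal. ring. }
  eapply Rle_trans. apply fsum_le. intros j _. apply fsum_abs. rewrite fsum_swap.
  apply sum_Delta_bound; auto. split; [apply gp_nonneg| apply gp_le1; auto]. Qed.

Lemma HC_sup d F K n k : FH rho d F K -> 0 <= K -> (1 <= n)%nat -> (k <= 2 ^ n)%nat ->
  fsum d (fun j => Rabs (F j (gp n k))) <= Vc rho * K.
Proof. intros HF HK Hn Hk. pose proof (HC_sup0 d F K n k HF HK Hn Hk). destruct HF as [H0 _].
  eapply Rle_trans. apply (fsum_le _ _ (fun j => Rabs (F j (gp n k) - F j 0) + Rabs (F j 0))).
  intros j _. replace (F j (gp n k)) with ((F j (gp n k) - F j 0) + F j 0) at 1 by ring. apply Rabs_triang.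
  rewrite fsum_plus. unfold Vc. unfold Rdiv in *. lra. Qed.

Lemma SS_rowdiff d F K p a b : (forall p, CB d F p (K / rho ^ p)) -> 0 <= K ->
  fsum d (fun j => Rabs (SS (F j) p b - SS (F j) p a)) <= 2 * K * Rabs (b - a) * ((2 / rho) ^ p / (2 / rho - 1)).
Proof. intros H HK.
  rewrite (fsum_ext d _ (fun j => Rabs (fsum p (fun q => Delta (F j) q b - Delta (F j) q a)))) by (intros; rewrite SS_diff; auto).
  eapply Rle_trans. apply fsum_le. intros j _. apply fsum_abs. rewrite fsum_swap.
  eapply Rle_trans. apply fsum_le. intros q _. apply (RS_Delta_diff d F q (K / rho ^ q)); auto. apply Kp_nonneg; auto.
  rewrite (fsum_ext _ _ (fun q => (2 * K * Rabs (b - a)) * (2 ^ q / rho ^ q))) by (intros; unfold Rdiv; ring).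
  rewrite fsum_scal. apply Rmult_le_compat_l. pose proof (Rabs_pos (b - a)). nra. apply geom_up; auto. Qed.

Lemma FH_CB1 d F K j : FH rho d F K -> (j < d)%nat -> forall p, CB1 (F j) p (K / rho ^ p).
Proof. intros [_ H] Hj p m Hm. eapply Rle_trans; [|apply (H p m Hm)].
  apply (fsum_term_le d (fun j => Rabs (coef (F j) p m))); auto. intros; apply Rabs_pos. Qed.

Lemma FH_0 d F K j : FH rho d F K -> (j < d)%nat -> Rabs (F j 0) <= rho * K.
Proof. intros [H _] Hj. eapply Rle_trans; [|apply H].
  apply (fsum_term_le d (fun j => Rabs (F j 0))); auto. intros; apply Rabs_pos. Qed.

Lemma SS_bound f K n x : (forall p, CB1 f p (K / rho ^ p)) -> 0 <= K -> 0 <= x <= 1 ->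
  Rabs (SS f n x) <= Rabs (f 0) + 2 * K / (1 - / rho).
Proof. intros H HK Hx. rewrite SS_expand. eapply Rle_trans; [apply Rabs_triang|].
  apply Rplus_le_compat_l. eapply Rle_trans; [apply fsum_abs|].
  pose proof (sum_Delta_bound 1 (fun _ => f) K n x (fun p => CB1_CB f p _ (H p)) HK Hx).
  simpl in H0. rewrite (fsum_ext _ _ (fun p => 0 + Rabs (Delta f p x))) by (intros; ring). auto. Qed.

Lemma dSS_bound f K n x : (forall p, CB1 f p (K / rho ^ p)) -> 0 <= K ->
  Rabs (dSS f n x) <= 2 * K * ((2 / rho) ^ n / (2 / rho - 1)).
Proof. intros H HK. rewrite dSS_expand. eapply Rle_trans; [apply fsum_abs|].
  eapply Rle_trans. apply fsum_le. intros p _. apply (dDelta_bound f p (K / rho ^ p)); auto. apply Kp_nonneg; auto.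
  rewrite (fsum_ext _ _ (fun q => (2 * K) * (2 ^ q / rho ^ q))) by (intros; unfold Rdiv; ring).
  rewrite fsum_scal. apply Rmult_le_compat_l. lra. apply geom_up; auto. Qed.
End Rho2.

Lemma lim_le (u : nat -> R) l a B N : Un_cv u l -> (forall M, (N <= M)%nat -> Rabs (u M - a) <= B) -> Rabs (l - a) <= B.
Proof. intros Hu H. destruct (Rle_dec (Rabs (l - a)) B) as [|Hn]; auto. exfalso.
  destruct (Hu (Rabs (l - a) - B)) as [N0 HN0]; [lra|].
  specialize (HN0 (max N N0) ltac:(lia)). specialize (H (max N N0) ltac:(lia)).
  unfold R_dist in HN0. pose proof (Rabs_triang (u (max N N0) - a) (l - u (max N N0))).
  replace (u (max N N0) - a + (l - u (max N N0))) with (l - a) in H0 by ring.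
  rewrite Rabs_minus_sym in HN0. lra. Qed.

Lemma pow_small r eps : 0 <= r < 1 -> 0 < eps -> exists N, forall n, (N <= n)%nat -> r ^ n < eps.
Proof. intros Hr He. destruct (pow_lt_1_zero r ltac:(rewrite Rabs_right; lra) eps He) as [N HN].
  exists N. intros n Hn. specialize (HN n Hn). rewrite Rabs_right in HN; auto. apply Rle_ge, pow_le; lra. Qed.

Lemma tele_bound (u : nat -> R) C r N : 0 <= C -> 0 <= r < 1 ->
  (forall k, Rabs (u (S k) - u k) <= C * r ^ k) ->
  forall j, Rabs (u (N + j)%nat - u N) <= C * r ^ N / (1 - r).
Proof. intros HC Hr H.
  assert (forall j, Rabs (u (N + j)%nat - u N) <= C * r ^ N * fsum j (fun k => r ^ k)).
  { induction j. rewrite Nat.add_0_r. simpl. rewrite Rminus_diag, Rabs_R0. lra.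
    replace (N + S j)%nat with (S (N + j)) by lia. simpl fsum.
    replace (u (S (N + j)) - u N) with ((u (S (N + j)) - u (N + j)%nat) + (u (N + j)%nat - u N)) by ring.
    eapply Rle_trans; [apply Rabs_triang|]. specialize (H (N + j)%nat). rewrite pow_add in H. lra. }
  intros j. eapply Rle_trans; [apply H0|]. unfold Rdiv. apply Rmult_le_compat_l.
  apply Rmult_le_pos; auto; apply pow_le; lra.
  pose proof (fsum_geom_lt1 j r Hr). lra. Qed.

Lemma small_mul K x y : 0 < K -> x < y / K -> K * x < y.
Proof. intros HK H. apply (Rmult_lt_compat_l K) in H; auto. unfold Rdiv in H.
  rewrite (Rmult_comm y), <- Rmult_assoc, Rinv_r, Rmult_1_l in H by lra. auto. Qed.

Lemma cauchy_unif n (F : nat -> nat -> R -> R) C r : 0 <= C -> 0 <= r < 1 ->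
  (forall N i t, (i < n)%nat -> 0 <= t <= 1 -> Rabs (F (S N) i t - F N i t) <= C * r ^ N) ->
  exists G, unif_cv01 n F G /\
    (forall N i t, (i < n)%nat -> 0 <= t <= 1 -> Rabs (F N i t - G i t) <= C * r ^ N / (1 - r)).
Proof. intros HC Hr H.
  set (G := fun i t => epsilon (inhabits 0) (fun l => Un_cv (fun N => F N i t) l)).
  assert (HG : forall i t, (i < n)%nat -> 0 <= t <= 1 -> Un_cv (fun N => F N i t) (G i t)).
  { intros i t Hi Ht. unfold G. apply epsilon_spec.
    destruct (Rcomplete.R_complete (fun N => F N i t)) as [l Hl]; [|exists l; auto].
    intros eps He. destruct (pow_small r (eps / 2 * (1 - r) / (C + 1))) as [N0 HN0]; auto.
    apply Rdiv_lt_0_compat; [apply Rmult_lt_0_compat|]; lra.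
    exists N0. intros a b Ha Hb. unfold R_dist.
    assert (B : forall m, (N0 <= m)%nat -> Rabs (F m i t - F N0 i t) <= C * r ^ N0 / (1 - r)).
    { intros m Hm. replace m with (N0 + (m - N0))%nat by lia. apply (tele_bound (fun N => F N i t)); auto. }
    pose proof (B a Ha). pose proof (B b Hb). specialize (HN0 N0 ltac:(lia)).
    assert (C * r ^ N0 / (1 - r) < eps / 2).
    { apply (Rmult_lt_reg_r (1 - r)); [lra|]. unfold Rdiv. rewrite Rmult_assoc, Rinv_l, Rmult_1_r by lra.
      assert (0 <= r ^ N0) by (apply pow_le; lra).
      assert (C * r ^ N0 <= (C + 1) * r ^ N0) by nra.
      assert ((C + 1) * r ^ N0 < eps / 2 * (1 - r)).
      { apply small_mul; [lra|auto]. }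
      lra. }
    replace (F a i t - F b i t) with ((F a i t - F N0 i t) - (F b i t - F N0 i t)) by ring.
    eapply Rle_lt_trans; [apply Rabs_triang|]. rewrite Rabs_Ropp. lra. }
  assert (HB : forall N i t, (i < n)%nat -> 0 <= t <= 1 -> Rabs (F N i t - G i t) <= C * r ^ N / (1 - r)).
  { intros N i t Hi Ht. rewrite Rabs_minus_sym. apply (lim_le _ _ _ _ N (HG i t Hi Ht)).
    intros M HM. replace M with (N + (M - N))%nat by lia. apply (tele_bound (fun N => F N i t)); auto. }
  exists G. split; auto.
  intros eps He. destruct (pow_small r (eps * (1 - r) / (C + 1))) as [N0 HN0]; auto.
  apply Rdiv_lt_0_compat; [apply Rmult_lt_0_compat|]; lra.
  exists N0. intros N HN i t Hi Ht. eapply Rle_lt_trans; [apply HB; auto|].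
  specialize (HN0 N HN). apply (Rmult_lt_reg_r (1 - r)); [lra|]. unfold Rdiv. rewrite Rmult_assoc, Rinv_l, Rmult_1_r by lra.
  assert (0 <= r ^ N) by (apply pow_le; lra).
  assert (C * r ^ N <= (C + 1) * r ^ N) by nra.
  assert ((C + 1) * r ^ N < eps * (1 - r)).
  { apply small_mul; [lra|auto]. }
  lra. Qed.

Lemma unif_pw n F G : unif_cv01 n F G -> pw_cv01 n F G.
Proof. intros H i t Hi Ht eps He. destruct (H eps He) as [N0 HN0]. exists N0. intros N HN.
  unfold R_dist. apply HN0; auto. Qed.

Lemma pw_shift n F G : pw_cv01 n (fun N => F (S N)) G -> pw_cv01 n F G.
Proof. intros H i t Hi Ht eps He. destruct (H i t Hi Ht eps He) as [N0 HN0]. exists (S N0).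
  intros N HN. destruct N; [lia|]. apply HN0; lia. Qed.

Lemma unif_shift n F G : unif_cv01 n F G -> unif_cv01 n (fun N => F (S N)) G.
Proof. intros H eps He. destruct (H eps He) as [N0 HN0]. exists N0. intros N HN i t Hi Ht. apply HN0; auto; lia. Qed.

Lemma unif_sum3 n F1 F2 F3 F G1 G2 G3 :
  unif_cv01 n F1 G1 -> unif_cv01 n F2 G2 -> unif_cv01 n F3 G3 ->
  (forall N i t, (i < n)%nat -> 0 <= t <= 1 -> F N i t = F1 N i t + F2 N i t + F3 N i t) ->
  unif_cv01 n F (fun i t => G1 i t + G2 i t + G3 i t).
Proof. intros H1 H2 H3 E eps He.
  destruct (H1 (eps / 3)) as [N1 K1]; [lra|]. destruct (H2 (eps / 3)) as [N2 K2]; [lra|].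
  destruct (H3 (eps / 3)) as [N3 K3]; [lra|].
  exists (max N1 (max N2 N3)). intros N HN i t Hi Ht. rewrite E by auto.
  specialize (K1 N ltac:(lia) i t Hi Ht). specialize (K2 N ltac:(lia) i t Hi Ht). specialize (K3 N ltac:(lia) i t Hi Ht).
  replace (F1 N i t + F2 N i t + F3 N i t - (G1 i t + G2 i t + G3 i t)) with
    ((F1 N i t - G1 i t) + (F2 N i t - G2 i t) + (F3 N i t - G3 i t)) by ring.
  eapply Rle_lt_trans; [apply Rabs_triang|]. pose proof (Rabs_triang (F1 N i t - G1 i t) (F2 N i t - G2 i t)). lra. Qed.

Lemma abs3 a b c : Rabs (a - b + c) <= Rabs a + Rabs b + Rabs c.
Proof. rabs. Qed.

Lemma unif_cont n F G : unif_cv01 n F G -> (forall N i, (i < n)%nat -> cont01 (F N i)) -> vec_cont01 n G.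
Proof. intros H HF i Hi t Ht eps He. destruct (H (eps / 3)) as [N0 HN0]; [lra|].
  destruct (HF N0 i Hi t Ht (eps / 3)) as [del [Hd Hdel]]; [lra|].
  exists del. split; auto. intros s Hs Hst.
  pose proof (HN0 N0 (le_n _) i s Hi Hs). pose proof (HN0 N0 (le_n _) i t Hi Ht).
  specialize (Hdel s Hs Hst).
  replace (G i s - G i t) with ((F N0 i s - F N0 i t) - (F N0 i s - G i s) + (F N0 i t - G i t)) by ring.
  eapply Rle_lt_trans; [apply abs3|]. lra. Qed.

Lemma cont01_minus f g : cont01 f -> cont01 g -> cont01 (fun t => f t - g t).
Proof. intros Hf Hg t Ht eps He. destruct (Hf t Ht (eps/2)) as [d1 [D1 K1]]; [lra|].
  destruct (Hg t Ht (eps/2)) as [d2 [D2 K2]]; [lra|].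
  exists (Rmin d1 d2). split. apply Rmin_pos; auto. intros s Hs Hst.
  specialize (K1 s Hs ltac:(pose proof (Rmin_l d1 d2); lra)). specialize (K2 s Hs ltac:(pose proof (Rmin_r d1 d2); lra)).
  replace (f s - g s - (f t - g t)) with ((f s - f t) - (g s - g t)) by ring.
  eapply Rle_lt_trans; [apply Rabs_triang|]. rewrite Rabs_Ropp. lra. Qed.

Definition Lip01 (f : R -> R) := exists L, 0 <= L /\ forall s t, 0 <= s <= 1 -> 0 <= t <= 1 -> Rabs (f s - f t) <= L * Rabs (s - t).

Lemma Lip01_cont f : Lip01 f -> cont01 f.
Proof. intros [L [HL H]] t Ht eps He. exists (eps / (L + 1)). split. apply Rdiv_lt_0_compat; lra.
  intros s Hs Hst. eapply Rle_lt_trans; [apply H; auto|].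
  assert (L * Rabs (s - t) <= (L + 1) * Rabs (s - t)) by (pose proof (Rabs_pos (s - t)); nra).
  assert ((L + 1) * Rabs (s - t) < eps).
  { apply (Rmult_lt_reg_r (/ (L + 1))). apply Rinv_0_lt_compat; lra.
    rewrite Rmult_comm, <- Rmult_assoc, Rinv_l, Rmult_1_l by lra. unfold Rdiv in Hst. lra. }
  lra. Qed.

Lemma Lip01_bd f : Lip01 f -> exists M, forall t, 0 <= t <= 1 -> Rabs (f t) <= M.
Proof. intros [L [HL H]]. exists (Rabs (f 0) + L). intros t Ht. specialize (H t 0 Ht ltac:(lra)).
  rewrite Rminus_0_r in H. rewrite (Rabs_right t) in H by lra.
  replace (f t) with ((f t - f 0) + f 0) by ring. eapply Rle_trans; [apply Rabs_triang|]. nra. Qed.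

Lemma Lip01_plus f g : Lip01 f -> Lip01 g -> Lip01 (fun t => f t + g t).
Proof. intros [L1 [H1 K1]] [L2 [H2 K2]]. exists (L1 + L2). split; [lra|]. intros s t Hs Ht.
  specialize (K1 s t Hs Ht). specialize (K2 s t Hs Ht).
  replace (f s + g s - (f t + g t)) with ((f s - f t) + (g s - g t)) by ring.
  eapply Rle_trans; [apply Rabs_triang|]. lra. Qed.

Lemma Lip01_const c : Lip01 (fun _ => c).
Proof. exists 0. split; [lra|]. intros. rewrite Rminus_diag, Rabs_R0. lra. Qed.

Lemma Lip01_mult f g : Lip01 f -> Lip01 g -> Lip01 (fun t => f t * g t).
Proof. intros Hf Hg. destruct (Lip01_bd f Hf) as [Mf HMf]. destruct (Lip01_bd g Hg) as [Mg HMg].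
  destruct Hf as [L1 [H1 K1]]. destruct Hg as [L2 [H2 K2]].
  assert (0 <= Mf) by (specialize (HMf 0 ltac:(lra)); pose proof (Rabs_pos (f 0)); lra).
  assert (0 <= Mg) by (specialize (HMg 0 ltac:(lra)); pose proof (Rabs_pos (g 0)); lra).
  exists (Mf * L2 + Mg * L1). split; [nra|]. intros s t Hs Ht.
  replace (f s * g s - f t * g t) with (f s * (g s - g t) + g t * (f s - f t)) by ring.
  eapply Rle_trans; [apply Rabs_triang|]. rewrite !Rabs_mult.
  specialize (K1 s t Hs Ht). specialize (K2 s t Hs Ht). specialize (HMf s Hs). specialize (HMg t Ht).
  pose proof (Rabs_pos (f s)). pose proof (Rabs_pos (g t)). pose proof (Rabs_pos (g s - g t)). pose proof (Rabs_pos (f s - f t)).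
  assert (Rabs (f s) * Rabs (g s - g t) <= Mf * (L2 * Rabs (s - t))) by (apply Rmult_le_compat; auto).
  assert (Rabs (g t) * Rabs (f s - f t) <= Mg * (L1 * Rabs (s - t))) by (apply Rmult_le_compat; auto).
  lra. Qed.

Lemma Lip01_fsum N (h : nat -> R -> R) : (forall m, (m < N)%nat -> Lip01 (h m)) -> Lip01 (fun t => fsum N (fun m => h m t)).
Proof. induction N; intros H; simpl. apply Lip01_const.
  apply (Lip01_plus (fun t => fsum N (fun m => h m t)) (h N)). apply IHN; intros; apply H; lia. apply H; lia. Qed.

Lemma Lip01_phi p m : Lip01 (phi p m).
Proof. exists (2 ^ p). split. apply pow_le; lra. intros; apply phi_lip. Qed.

Lemma Lip01_Delta f p : Lip01 (Delta f p).
Proof. unfold Delta. apply (Lip01_fsum _ (fun m t => coef f p m * phi p m t)). intros.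
  apply (Lip01_mult (fun _ => coef f p m) (phi p m)). apply Lip01_const. apply Lip01_phi. Qed.

Lemma Lip01_SS f n : Lip01 (SS f n).
Proof. induction n; simpl. apply Lip01_const.
  apply (Lip01_plus (SS f n) (Delta f n)); auto. apply Lip01_Delta. Qed.

Lemma Lip01_Ppart d v w P i : Lip01 (Ppart d v w P i).
Proof. unfold Ppart. apply (Lip01_fsum _ (fun p t => fsum d (fun j => SS (v i j) p t * Delta (w j) p t))). intros.
  apply (Lip01_fsum _ (fun j t => SS (v i j) m t * Delta (w j) m t)). intros j _.
  apply (Lip01_mult (SS (v i j) m) (Delta (w j) m)). apply Lip01_SS. apply Lip01_Delta. Qed.

Lemma isR_plus (f g : R -> R) a b If Ig : is_RInt f a b If -> is_RInt g a b Ig ->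
  is_RInt (fun y => f y + g y) a b (If + Ig).
Proof. intros H1 H2. exact (is_RInt_plus f g a b If Ig H1 H2). Qed.

Lemma isR_chasles (f : R -> R) a b c l1 l2 : is_RInt f a b l1 -> is_RInt f b c l2 -> is_RInt f a c (l1 + l2).
Proof. intros H1 H2. exact (is_RInt_Chasles f a b c l1 l2 H1 H2). Qed.

Lemma isR_point (f : R -> R) a : is_RInt f a a 0.
Proof. exact (is_RInt_point f a). Qed.

Lemma isR_unique (f : R -> R) a b l : is_RInt f a b l -> RInt f a b = l.
Proof. apply (is_RInt_unique (V := R_CompleteNormedModule)). Qed.

Lemma isR_ext (f g : R -> R) a b l : (forall x, Rmin a b < x < Rmax a b -> f x = g x) -> is_RInt f a b l -> is_RInt g a b l.
Proof. apply is_RInt_ext. Qed.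

Lemma isR_poly c x f0 s sg : c <= x ->
  is_RInt (fun y => (f0 + s * (y - c)) * sg) c x (sg * (f0 * (x - c) + s * (x - c) ^ 2 / 2)).
Proof. intros H.
  pose (F := fun y => sg * (f0 * (y - c) + s * (y - c) ^ 2 / 2)).
  replace (sg * (f0 * (x - c) + s * (x - c) ^ 2 / 2)) with (F x - F c) by (unfold F; simpl; field).
  apply (is_RInt_derive F (fun y => (f0 + s * (y - c)) * sg)).
  - intros y _. unfold F. auto_derive; auto. field.
  - intros y _. apply (ex_derive_continuous (fun y => (f0 + s * (y - c)) * sg)). auto_derive; auto.
Qed.

Lemma isR_piece (f dg : R -> R) c x s sg : c <= x ->
  (forall y, c <= y <= x -> f y = f c + s * (y - c)) -> (forall y, c < y < x -> dg y = sg) ->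
  is_RInt (fun y => f y * dg y) c x (sg * (f c * (x - c) + s * (x - c) ^ 2 / 2)).
Proof. intros H H1 H2. eapply isR_ext; [|apply isR_poly; auto].
  intros y Hy. rewrite Rmin_left, Rmax_right in Hy by lra. rewrite (H1 y), (H2 y) by lra. auto. Qed.

Lemma isR_piece' (df g : R -> R) c x s sg : c <= x ->
  (forall y, c <= y <= x -> g y = g c + s * (y - c)) -> (forall y, c < y < x -> df y = sg) ->
  is_RInt (fun y => df y * g y) c x (sg * (g c * (x - c) + s * (x - c) ^ 2 / 2)).
Proof. intros H H1 H2. eapply isR_ext; [|apply (isR_piece g df c x s sg); auto].
  intros y _. cbv beta. ring. Qed.

Definition PRconc (L : nat) (f df g dg : R -> R) (x : R) := 
  is_RInt (fun y => f y * dg y + df y * g y) 0 x (f x * g x - f 0 * g 0) /\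
  ex_RInt (fun y => f y * dg y) 0 x /\ ex_RInt (fun y => df y * g y) 0 x.

Lemma PA_prod L (f df g dg : R -> R) : PA L f df -> PA L g dg ->
  forall k, (k <= 2 ^ L)%nat -> forall x, 0 <= x <= gp L k -> PRconc L f df g dg x.
Proof. intros Hf Hg. induction k; intros Hk x Hx.
  - rewrite gp_0 in Hx. replace x with 0 by lra. unfold PRconc. split; [|split].
    replace (f 0 * g 0 - f 0 * g 0) with 0 by ring. apply isR_point.
    exists 0; apply isR_point. exists 0; apply isR_point.
  - destruct (Rle_dec x (gp L k)) as [Hle|Hlt]. apply IHk; [lia|lra].
    assert (Hk' : (k < 2 ^ L)%nat) by lia.
    destruct (Hf k Hk') as [s [F1 F2]]. destruct (Hg k Hk') as [sg [G1 G2]].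
    pose proof (gp_nonneg L k) as Hc.
    destruct (IHk ltac:(lia) (gp L k) ltac:(lra)) as [I1 [E1 E2]].
    assert (P1 : is_RInt (fun y => f y * dg y) (gp L k) x
       (sg * (f (gp L k) * (x - gp L k) + s * (x - gp L k) ^ 2 / 2))).
    { apply isR_piece; [lra| |]; intros; [apply F1|apply G2]; lra. }
    assert (P2 : is_RInt (fun y => df y * g y) (gp L k) x
       (s * (g (gp L k) * (x - gp L k) + sg * (x - gp L k) ^ 2 / 2))).
    { apply isR_piece'; [lra| |]; intros; [apply G1|apply F2]; lra. }
    split; [|split].
    + replace (f x * g x - f 0 * g 0) with
        ((f (gp L k) * g (gp L k) - f 0 * g 0) +
         (sg * (f (gp L k) * (x - gp L k) + s * (x - gp L k) ^ 2 / 2) +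
          s * (g (gp L k) * (x - gp L k) + sg * (x - gp L k) ^ 2 / 2))).
      apply (isR_chasles _ 0 (gp L k) x); auto. apply (isR_plus (fun y => f y * dg y) (fun y => df y * g y)); auto.
      rewrite (F1 x), (G1 x) by lra. field.
    + eapply ex_RInt_Chasles; [apply E1|]. eexists; apply P1.
    + eapply ex_RInt_Chasles; [apply E2|]. eexists; apply P2.
Qed.

Lemma PA_prodT L (f df g dg : R -> R) x : PA L f df -> PA L g dg -> 0 <= x <= 1 -> PRconc L f df g dg x.
Proof. intros Hf Hg Hx. apply (PA_prod L f df g dg Hf Hg (2 ^ L)); auto. rewrite gp_top; auto. Qed.

Lemma Rint_eq (h : R -> R) t : ex_RInt h 0 t -> Rint h 0 t = RInt h 0 t.
Proof. intros H. unfold Rint.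
  destruct (epsilon_spec (inhabits 0) (fun I => exists pr : Riemann_integrable h 0 t, RiemannInt pr = I)) as [pr E].
  - exists (RInt h 0 t). exists (ex_RInt_Reals_0 h 0 t H). symmetry. apply RInt_Reals.
  - rewrite <- E. rewrite (RInt_Reals h 0 t pr). auto. Qed.

Lemma PA_int_ex1 L (f df g dg : R -> R) x : PA L f df -> PA L g dg -> 0 <= x <= 1 -> ex_RInt (fun y => f y * dg y) 0 x.
Proof. intros. apply (PA_prodT L f df g dg x); auto. Qed.
Lemma PA_int_ex2 L (f df g dg : R -> R) x : PA L f df -> PA L g dg -> 0 <= x <= 1 -> ex_RInt (fun y => df y * g y) 0 x.
Proof. intros. apply (PA_prodT L f df g dg x); auto. Qed.

Lemma PA_prodrule L (f df g dg : R -> R) x : PA L f df -> PA L g dg -> 0 <= x <= 1 ->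
  RInt (fun y => f y * dg y) 0 x + RInt (fun y => df y * g y) 0 x = f x * g x - f 0 * g 0.
Proof. intros Hf Hg Hx. destruct (PA_prodT L f df g dg x Hf Hg Hx) as [I [E1 E2]].
  rewrite <- (isR_unique _ _ _ _ I). symmetry. apply (RInt_plus (V := R_CompleteNormedModule)); auto. Qed.

Lemma PA_trap L (f df g dg : R -> R) k : PA L f df -> PA L g dg -> (k < 2 ^ L)%nat ->
  is_RInt (fun y => f y * dg y) (gp L k) (gp L (S k))
    ((f (gp L k) + f (gp L (S k))) / 2 * (g (gp L (S k)) - g (gp L k))).
Proof. intros Hf Hg Hk. destruct (Hf k Hk) as [s [F1 F2]]. destruct (Hg k Hk) as [sg [G1 G2]].
  pose proof (gp_lt L k (S k) ltac:(lia)).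
  replace ((f (gp L k) + f (gp L (S k))) / 2 * (g (gp L (S k)) - g (gp L k))) with
    (sg * (f (gp L k) * (gp L (S k) - gp L k) + s * (gp L (S k) - gp L k) ^ 2 / 2)).
  apply isR_piece; [lra| |]; intros; [apply F1|apply G2]; lra.
  rewrite (F1 (gp L (S k))), (G1 (gp L (S k))) by lra. field. Qed.

Lemma RInt_diff (h : R -> R) a b : ex_RInt h 0 a -> ex_RInt h 0 b -> RInt h 0 b - RInt h 0 a = RInt h a b.
Proof. intros Ha Hb.
  assert (ex_RInt h a 0) by (apply ex_RInt_swap; auto).
  rewrite <- (RInt_Chasles (V := R_CompleteNormedModule) h a 0 b); auto.
  rewrite <- (opp_RInt_swap (V := R_CompleteNormedModule) h 0 a); auto.
  change (plus (opp (RInt h 0 a)) (RInt h 0 b)) with (- RInt h 0 a + RInt h 0 b). ring. Qed.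

Lemma RInt_lip (h : R -> R) M a b : ex_RInt h 0 a -> ex_RInt h 0 b -> 0 <= a <= 1 -> 0 <= b <= 1 ->
  (forall x, 0 <= x <= 1 -> Rabs (h x) <= M) -> Rabs (RInt h 0 b - RInt h 0 a) <= M * Rabs (b - a).
Proof. intros Ha Hb Ha' Hb' HM. rewrite RInt_diff by auto.
  assert (ex_RInt h a b) by (eapply ex_RInt_Chasles; [apply ex_RInt_swap, Ha|auto]).
  destruct (Rle_dec a b).
  - rewrite (Rabs_right (b - a)) by lra. rewrite Rmult_comm. apply abs_RInt_le_const; auto.
    intros; apply HM; lra.
  - rewrite <- (opp_RInt_swap (V := R_CompleteNormedModule) h b a) by (apply ex_RInt_swap; auto).
    change (Rabs (- RInt h b a) <= M * Rabs (b - a)). rewrite Rabs_Ropp.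
    rewrite (Rabs_left (b - a)) by lra. rewrite Rmult_comm. replace (- (b - a)) with (a - b) by ring.
    apply abs_RInt_le_const; [lra| apply ex_RInt_swap; auto|]. intros; apply HM; lra. Qed.

Lemma RInt_bound (h : R -> R) M x : ex_RInt h 0 x -> 0 <= x <= 1 ->
  (forall y, 0 <= y <= 1 -> Rabs (h y) <= M) -> Rabs (RInt h 0 x) <= M.
Proof. intros H Hx HM. assert (0 <= M) by (specialize (HM 0 ltac:(lra)); pose proof (Rabs_pos (h 0)); lra).
  eapply Rle_trans; [apply abs_RInt_le_const; auto; [lra| intros; apply HM; lra]|]. nra. Qed.

Lemma RInt_plus_R (f g : R -> R) a b : ex_RInt f a b -> ex_RInt g a b ->
  RInt (fun x => f x + g x) a b = RInt f a b + RInt g a b.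
Proof. intros. apply (RInt_plus (V := R_CompleteNormedModule) f g); auto. Qed.

Lemma ex_RInt_plus_R (f g : R -> R) a b : ex_RInt f a b -> ex_RInt g a b ->
  ex_RInt (fun x => f x + g x) a b.
Proof. intros. apply (ex_RInt_plus f g); auto. Qed.

Lemma RInt_scal_R (f : R -> R) a b c : ex_RInt f a b -> RInt (fun x => c * f x) a b = c * RInt f a b.
Proof. intros. apply (RInt_scal (V := R_CompleteNormedModule) f); auto. Qed.

Lemma ex_RInt_scal_R (f : R -> R) a b c : ex_RInt f a b -> ex_RInt (fun x => c * f x) a b.
Proof. intros. apply (ex_RInt_scal f); auto. Qed.

Lemma RInt_ext_R (f g : R -> R) a b : (forall x, f x = g x) -> RInt f a b = RInt g a b.
Proof. intros H. apply RInt_ext. intros; auto. Qed.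

Lemma ex_RInt_ext_R (f g : R -> R) a b : (forall x, f x = g x) -> ex_RInt f a b -> ex_RInt g a b.
Proof. intros H. apply ex_RInt_ext. intros; auto. Qed.

Lemma RInt_zero_R (f : R -> R) a b : (forall x, f x = 0) -> RInt f a b = 0.
Proof. intros H. rewrite (RInt_ext_R f (fun _ => 0)) by auto. rewrite RInt_const.
  apply (scal_zero_r (K := R_Ring) (V := R_ModuleSpace)). Qed.

Lemma fsum_mult M M' a b : fsum M a * fsum M' b = fsum M (fun m => fsum M' (fun k => a m * b k)).
Proof. induction M; simpl; [ring|]. rewrite <- IHM. rewrite fsum_scal. ring. Qed.

Lemma ex_RInt_fsum M (h : nat -> R -> R) a b : (forall m, (m < M)%nat -> ex_RInt (h m) a b) ->
  ex_RInt (fun x => fsum M (fun m => h m x)) a b.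
Proof. induction M; intros H; simpl.
  - apply (ex_RInt_ext_R (fun _ => 0)); auto. apply ex_RInt_const.
  - apply ex_RInt_plus_R. apply IHM; intros; apply H; lia. apply H; lia. Qed.

Lemma RInt_fsum M (h : nat -> R -> R) a b : (forall m, (m < M)%nat -> ex_RInt (h m) a b) ->
  RInt (fun x => fsum M (fun m => h m x)) a b = fsum M (fun m => RInt (h m) a b).
Proof. induction M; intros H; simpl.
  - apply RInt_zero_R; auto.
  - rewrite RInt_plus_R; [rewrite IHM; [auto| intros; apply H; lia] | apply ex_RInt_fsum; intros; apply H; lia | apply H; lia]. Qed.

Lemma phichi_sym p m k x : (1 <= p)%nat -> phi p m x * chi p k x = chi p m x * phi p k x.
Proof. intros Hp. destruct (Nat.eq_dec m k) as [->|Hn]; [ring|].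
  assert (phi p m x * chi p k x = 0).
  { destruct (Req_dec (phi p m x) 0) as [E|E]; [rewrite E; ring|].
    destruct (Req_dec (chi p k x) 0) as [E'|E']; [rewrite E'; ring|].
    exfalso. apply Hn. destruct m. rewrite phi_p0 in E by auto; lra.
    destruct k. rewrite chi_p0 in E' by auto; lra.
    apply (supp_unique p (S m) (S k) x); try lia.
    pose proof (phi_supp p (S m) x ltac:(lia) E); lra. apply chi_supp; auto; lia. }
  assert (chi p m x * phi p k x = 0).
  { destruct (Req_dec (chi p m x) 0) as [E|E]; [rewrite E; ring|].
    destruct (Req_dec (phi p k x) 0) as [E'|E']; [rewrite E'; ring|].
    exfalso. apply Hn. destruct m. rewrite chi_p0 in E by auto; lra.
    destruct k. rewrite phi_p0 in E' by auto; lra.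
    apply (supp_unique p (S m) (S k) x); try lia.
    apply chi_supp; auto; lia. pose proof (phi_supp p (S k) x ltac:(lia) E'); lra. }
  lra. Qed.

Lemma Delta_sym v w p x : (1 <= p)%nat -> Delta v p x * dDelta w p x = dDelta v p x * Delta w p x.
Proof. intros Hp. unfold Delta, dDelta. rewrite !fsum_mult. apply fsum_ext; intros m _. apply fsum_ext; intros k _.
  transitivity (coef v p m * coef w p k * (phi p m x * chi p k x)); [ring|].
  rewrite phichi_sym by auto. ring. Qed.

Section Scalar.
Variables v w : R -> R.

Definition Aint N t := RInt (fun s => SS v N s * dSS w N s) 0 t.

Lemma ex_gen L (f df g dg : R -> R) t : PA L f df -> PA L g dg -> 0 <= t <= 1 ->
  ex_RInt (fun s => f s * dg s) 0 t /\ ex_RInt (fun s => df s * g s) 0 t.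
Proof. intros. split; [eapply PA_int_ex1|eapply PA_int_ex2]; eauto. Qed.

Lemma Aint_step K t : 0 <= t <= 1 ->
  Aint (S K) t - Aint K t =
    (RInt (fun s => Delta v K s * dSS w K s) 0 t - RInt (fun s => dSS v K s * Delta w K s) 0 t)
    + SS v K t * Delta w K t + RInt (fun s => Delta v K s * dDelta w K s) 0 t.
Proof. intros Ht.
  assert (P1 : PA (S K) (SS v K) (dSS v K)) by (apply PA_SS; lia).
  assert (P2 : PA (S K) (SS w K) (dSS w K)) by (apply PA_SS; lia).
  assert (P3 : PA (S K) (Delta v K) (dDelta v K)) by (apply PA_Delta; lia).
  assert (P4 : PA (S K) (Delta w K) (dDelta w K)) by (apply PA_Delta; lia).
  destruct (ex_gen _ _ _ _ _ t P1 P2 Ht) as [E1 _].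
  destruct (ex_gen _ _ _ _ _ t P3 P2 Ht) as [E2 _].
  destruct (ex_gen _ _ _ _ _ t P1 P4 Ht) as [E3 E3'].
  destruct (ex_gen _ _ _ _ _ t P3 P4 Ht) as [E4 _].
  unfold Aint.
  rewrite (RInt_ext_R _ (fun s => ((SS v K s * dSS w K s + Delta v K s * dSS w K s) + SS v K s * dDelta w K s)
     + Delta v K s * dDelta w K s)) by (intros; simpl; ring).
  rewrite !RInt_plus_R; auto; try (apply ex_RInt_plus_R; auto); try (apply ex_RInt_plus_R; auto).
  pose proof (PA_prodrule _ _ _ _ _ t P1 P4 Ht) as PR. rewrite Delta_at0 in PR.
  lra. Qed.

Lemma Aint_diag K t : (1 <= K)%nat -> 0 <= t <= 1 ->
  RInt (fun s => Delta v K s * dDelta w K s) 0 t = / 2 * (Delta v K t * Delta w K t).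
Proof. intros HK Ht.
  assert (P3 : PA (S K) (Delta v K) (dDelta v K)) by (apply PA_Delta; lia).
  assert (P4 : PA (S K) (Delta w K) (dDelta w K)) by (apply PA_Delta; lia).
  pose proof (PA_prodrule _ _ _ _ _ t P3 P4 Ht) as PR. rewrite Delta_at0 in PR.
  rewrite (RInt_ext_R (fun s => dDelta v K s * Delta w K s) (fun s => Delta v K s * dDelta w K s)) in PR
    by (intros; rewrite Delta_sym; auto).
  lra. Qed.

Lemma Aint_0 t : Aint 0 t = 0.
Proof. unfold Aint. apply RInt_zero_R. intros; simpl; ring. Qed.

Lemma Aint_formula N t : 0 <= t <= 1 ->
  Aint (S N) t =
    fsum (S N) (fun p => RInt (fun s => Delta v p s * dSS w p s) 0 t - RInt (fun s => dSS v p s * Delta w p s) 0 t)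
    + RInt (fun s => Delta v 0 s * dDelta w 0 s) 0 t
    + / 2 * fsum N (fun p => Delta v (S p) t * Delta w (S p) t)
    + fsum (S N) (fun p => SS v p t * Delta w p t).
Proof. intros Ht. induction N.
  - pose proof (Aint_step 0 t Ht). rewrite Aint_0 in H. cbn [fsum]. lra.
  - pose proof (Aint_step (S N) t Ht). rewrite Aint_diag in H by (auto; lia).
    cbn [fsum] in *. lra. Qed.

Lemma level0_S t : 0 <= t <= 1 ->
  RInt (fun s => Delta v 0 s * dDelta w 0 s) 0 t =
  fsum 2 (fun m => fsum 2 (fun k => coef v 0 m * coef w 0 k * Rint (fun s => phi 0 m s * chi 0 k s) 0 t)).
Proof. intros Ht.
  assert (EX : forall m k, ex_RInt (fun s => phi 0 m s * chi 0 k s) 0 t).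
  { intros m k. eapply (PA_int_ex1 1 (phi 0 m) (chi 0 m) (phi 0 k) (chi 0 k)); auto; apply PA_hat; lia. }
  rewrite (RInt_ext_R _ (fun s => fsum 2 (fun m => fsum 2 (fun k => coef v 0 m * coef w 0 k * (phi 0 m s * chi 0 k s))))).
  2: { intros s. unfold Delta, dDelta. change (S (2 ^ 0)) with 2%nat. rewrite fsum_mult.
       apply fsum_ext; intros; apply fsum_ext; intros; ring. }
  rewrite RInt_fsum. apply fsum_ext; intros m _. rewrite RInt_fsum. apply fsum_ext; intros k _.
  rewrite RInt_scal_R by auto. rewrite Rint_eq by auto. auto.
  intros; apply ex_RInt_scal_R; auto.
  intros m _. apply ex_RInt_fsum. intros; apply ex_RInt_scal_R; auto. Qed.
End Scalar.

Lemma Iapprox_identity d v w N i t : 0 <= t <= 1 ->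
  Iapprox d v w N i t = Lpart d v w (S N) i t + Spart d v w N i t + Ppart d v w (S N) i t.
Proof. intros Ht.
  assert (HI : Iapprox d v w N i t = fsum d (fun j =>
    fsum (S N) (fun p => RInt (fun s => Delta (v i j) p s * dSS (w j) p s) 0 t - RInt (fun s => dSS (v i j) p s * Delta (w j) p s) 0 t)
    + RInt (fun s => Delta (v i j) 0 s * dDelta (w j) 0 s) 0 t
    + / 2 * fsum N (fun p => Delta (v i j) (S p) t * Delta (w j) (S p) t)
    + fsum (S N) (fun p => SS (v i j) p t * Delta (w j) p t))).
  { unfold Iapprox. apply fsum_ext. intros j _. rewrite <- Aint_formula by auto. unfold Aint.
    rewrite Rint_eq. auto. apply (PA_int_ex1 (S N) (SS (v i j) (S N)) (dSS (v i j) (S N)) (SS (w j) (S N)) (dSS (w j) (S N))); auto; apply PA_SS; lia. }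
  assert (HL : Lpart d v w (S N) i t = fsum (S N) (fun p => fsum d (fun j =>
     RInt (fun s => Delta (v i j) p s * dSS (w j) p s) 0 t - RInt (fun s => dSS (v i j) p s * Delta (w j) p s) 0 t))).
  { unfold Lpart. apply fsum_ext. intros p _. apply fsum_ext. intros j _.
       assert (P1 : PA (S p) (Delta (v i j) p) (dDelta (v i j) p)) by (apply PA_Delta; lia).
       assert (P2 : PA (S p) (SS (w j) p) (dSS (w j) p)) by (apply PA_SS; lia).
       assert (P3 : PA (S p) (SS (v i j) p) (dSS (v i j) p)) by (apply PA_SS; lia).
       assert (P4 : PA (S p) (Delta (w j) p) (dDelta (w j) p)) by (apply PA_Delta; lia).
       rewrite !Rint_eq. auto. eapply PA_int_ex2; eauto. eapply PA_int_ex1; eauto. }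
  assert (HS : Spart d v w N i t = fsum d (fun j => RInt (fun s => Delta (v i j) 0 s * dDelta (w j) 0 s) 0 t)
     + / 2 * fsum N (fun p => fsum d (fun j => Delta (v i j) (S p) t * Delta (w j) (S p) t))).
  { unfold Spart. f_equal. apply fsum_ext. intros j _. rewrite level0_S; auto. }
  rewrite HI, HL, HS. unfold Ppart.
  rewrite !fsum_plus. rewrite fsum_scal.
  rewrite (fsum_swap d (S N) (fun j p => RInt (fun s => Delta (v i j) p s * dSS (w j) p s) 0 t - RInt (fun s => dSS (v i j) p s * Delta (w j) p s) 0 t)).
  rewrite (fsum_swap d N (fun j p => Delta (v i j) (S p) t * Delta (w j) (S p) t)).
  rewrite (fsum_swap d (S N) (fun j p => SS (v i j) p t * Delta (w j) p t)).
  ring. Qed.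

Lemma Rp_bounds a : 0 < a < 1 -> 1 < Rpower 2 a < 2.
Proof. intros H. split.
  - rewrite <- (Rpower_O 2) at 1 by lra. apply Rpower_lt; lra.
  - rewrite <- (Rpower_1 2) at 2 by lra. apply Rpower_lt; lra. Qed.

Lemma Rp_pow a p : Rpower 2 (INR p * a) = Rpower 2 a ^ p.
Proof. rewrite Rmult_comm, <- Rpower_mult. apply Rpower_pow. unfold Rpower. apply exp_pos. Qed.

Lemma Rp_neg a : Rpower 2 (- a) = / Rpower 2 a.
Proof. apply Rpower_Ropp. Qed.

Lemma Rp_prod a b : 1 < a + b -> 2 < Rpower 2 a * Rpower 2 b.
Proof. intros H. rewrite <- Rpower_plus. rewrite <- (Rpower_1 2) at 1 by lra. apply Rpower_lt; lra. Qed.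

Lemma fsum_const k c : fsum k (fun _ => c) = INR k * c.
Proof. induction k; simpl fsum. simpl; ring. rewrite IHk, S_INR. ring. Qed.

Lemma abs_prod_le x y A B : Rabs x <= A -> Rabs y <= B -> Rabs (x * y) <= A * B.
Proof. intros. rewrite Rabs_mult. apply Rmult_le_compat; auto; apply Rabs_pos. Qed.

Lemma holder_K a K c0 c : holder_bound a K c0 c -> 0 <= c0 -> 0 <= K.
Proof. intros [H _] H0. pose proof (exp_pos (- a * ln 2)). unfold Rpower in H. nra. Qed.

Lemma mat_FH n d a v K i : 0 < a < 1 -> mat_holder n d a v K -> (i < n)%nat -> FH (Rpower 2 a) d (v i) K.
Proof. intros Ha [H0 H] Hi. pose proof (Rp_bounds a Ha) as Hr. split.
  - eapply Rle_trans. apply (fmax_ge n (fun i => fsum d (fun j => Rabs (v i j 0))) i Hi).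
    rewrite Rp_neg in H0. unfold mnorm in H0.
    apply (Rmult_le_reg_l (/ Rpower 2 a)). apply Rinv_0_lt_compat; lra.
    rewrite <- Rmult_assoc, Rinv_l, Rmult_1_l by lra. auto.
  - intros p m Hm. specialize (H p m Hm). rewrite Rp_pow in H.
    eapply Rle_trans. apply (fmax_ge n (fun i => fsum d (fun j => Rabs (coef (v i j) p m))) i Hi).
    unfold mnorm in H. assert (0 < Rpower 2 a ^ p) by (apply pow_lt; lra).
    apply (Rmult_le_reg_l (Rpower 2 a ^ p)); auto. unfold Rdiv. rewrite <- Rmult_assoc.
    rewrite (Rmult_comm _ K), Rmult_assoc, Rinv_r, Rmult_1_r by lra. auto. Qed.

Lemma vec_FH d b w K j : 0 < b < 1 -> vec_holder d b w K -> (j < d)%nat -> FH (Rpower 2 b) 1 (fun _ => w j) K.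
Proof. intros Hb [H0 H] Hj. pose proof (Rp_bounds b Hb) as Hr. split.
  - simpl. rewrite Rplus_0_l. eapply Rle_trans. apply (fmax_ge d (fun j => Rabs (w j 0)) j Hj).
    rewrite Rp_neg in H0. unfold vnorm in H0.
    apply (Rmult_le_reg_l (/ Rpower 2 b)). apply Rinv_0_lt_compat; lra.
    rewrite <- Rmult_assoc, Rinv_l, Rmult_1_l by lra. auto.
  - intros p m Hm. specialize (H p m Hm). rewrite Rp_pow in H. simpl. rewrite Rplus_0_l.
    eapply Rle_trans. apply (fmax_ge d (fun j => Rabs (coef (w j) p m)) j Hj).
    unfold vnorm in H. assert (0 < Rpower 2 b ^ p) by (apply pow_lt; lra).
    apply (Rmult_le_reg_l (Rpower 2 b ^ p)); auto. unfold Rdiv. rewrite <- Rmult_assoc.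
    rewrite (Rmult_comm _ K), Rmult_assoc, Rinv_r, Rmult_1_r by lra. auto. Qed.

Lemma mat_K n d a v K : mat_holder n d a v K -> 0 <= K.
Proof. intros H. eapply holder_K; [apply H|]. apply fmax_nonneg. Qed.
Lemma vec_K d b w K : vec_holder d b w K -> 0 <= K.
Proof. intros H. eapply holder_K; [apply H|]. apply fmax_nonneg. Qed.

Lemma pow_combine x y p : 0 < y -> x ^ p * / y ^ p = (x / y) ^ p.
Proof. intros H. unfold Rdiv. rewrite Rpow_mult_distr, pow_inv. auto. Qed.

Section Conv.
Variables (a b : R) (Ha : 0 < a < 1) (Hb : 0 < b < 1) (Hab : 1 < a + b).
Variables (n d : nat) (v : nat -> nat -> R -> R) (w : nat -> R -> R) (Kv Kw : R).
Hypothesis HV : mat_holder n d a v Kv.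
Hypothesis HW : vec_holder d b w Kw.

Let ra := Rpower 2 a.
Let rb := Rpower 2 b.
Lemma ra_b : 1 < ra < 2. Proof. apply Rp_bounds; auto. Qed.
Lemma rb_b : 1 < rb < 2. Proof. apply Rp_bounds; auto. Qed.
Lemma Kv_nn : 0 <= Kv. Proof. apply (mat_K n d a v Kv HV). Qed.
Lemma Kw_nn : 0 <= Kw. Proof. apply (vec_K d b w Kw HW). Qed.

Lemma CBv i j p : (i < n)%nat -> (j < d)%nat -> CB1 (v i j) p (Kv / ra ^ p).
Proof. intros Hi Hj. apply (FH_CB1 ra d (v i) Kv j); auto. apply (mat_FH n d a v Kv i Ha HV Hi). Qed.
Lemma CBw j p : (j < d)%nat -> CB1 (w j) p (Kw / rb ^ p).
Proof. intros Hj. pose proof (FH_CB1 rb 1 (fun _ => w j) Kw 0 (vec_FH d b w Kw j Hb HW Hj) ltac:(lia) p). auto. Qed.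
Lemma v0b i j : (i < n)%nat -> (j < d)%nat -> Rabs (v i j 0) <= ra * Kv.
Proof. intros Hi Hj. apply (FH_0 ra d (v i) Kv j); auto. apply (mat_FH n d a v Kv i Ha HV Hi). Qed.
Lemma w0b j : (j < d)%nat -> Rabs (w j 0) <= rb * Kw.
Proof. intros Hj. apply (FH_0 rb 1 (fun _ => w j) Kw 0); auto. apply (vec_FH d b w Kw j Hb HW Hj). Qed.

Definition rL := 2 / (ra * rb).
Lemma rL_b : 0 <= rL < 1.
Proof. pose proof (Rp_prod a b Hab). pose proof ra_b. pose proof rb_b. unfold rL. fold ra rb in H. split.
  apply Rlt_le, Rdiv_lt_0_compat; nra.
  apply (Rmult_lt_reg_r (ra * rb)); [nra|]. unfold Rdiv. rewrite Rmult_assoc, Rinv_l; nra. Qed.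

Definition CL := 4 * Kv * Kw * (/ (2 / rb - 1) + / (2 / ra - 1)).

Lemma Linc P i t : (i < n)%nat -> 0 <= t <= 1 ->
  Rabs (Lpart d v w (S P) i t - Lpart d v w P i t) <= (INR d * CL) * rL ^ P.
Proof. intros Hi Ht. unfold Lpart. cbn [fsum]. replace (fsum P _ + _ - fsum P _) with
    (fsum d (fun j => Rint (fun s => Delta (v i j) P s * dSS (w j) P s) 0 t - Rint (fun s => dSS (v i j) P s * Delta (w j) P s) 0 t)) by ring.
  eapply Rle_trans; [apply fsum_abs|]. rewrite Rmult_assoc, <- fsum_const. apply fsum_le. intros j Hj.
  pose proof ra_b. pose proof rb_b. pose proof Kv_nn. pose proof Kw_nn. pose proof (two_rho_gt1 ra ra_b). pose proof (two_rho_gt1 rb rb_b).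
  assert (P1 : PA (S P) (Delta (v i j) P) (dDelta (v i j) P)) by (apply PA_Delta; lia).
  assert (P2 : PA (S P) (SS (w j) P) (dSS (w j) P)) by (apply PA_SS; lia).
  assert (P3 : PA (S P) (SS (v i j) P) (dSS (v i j) P)) by (apply PA_SS; lia).
  assert (P4 : PA (S P) (Delta (w j) P) (dDelta (w j) P)) by (apply PA_Delta; lia).
  assert (E1 := PA_int_ex1 _ _ _ _ _ t P1 P2 Ht). assert (E2 := PA_int_ex2 _ _ _ _ _ t P3 P4 Ht).
  rewrite !Rint_eq by auto.
  assert (B1 : Rabs (RInt (fun s => Delta (v i j) P s * dSS (w j) P s) 0 t) <=
     (2 * (Kv / ra ^ P)) * (2 * Kw * ((2 / rb) ^ P / (2 / rb - 1)))).
  { apply RInt_bound; auto. intros y Hy. apply abs_prod_le.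
    apply Delta_bound; auto. apply CBv; auto. apply (Kp_nonneg ra ra_b); auto.
    apply (dSS_bound rb rb_b); auto. intros; apply CBw; auto. }
  assert (B2 : Rabs (RInt (fun s => dSS (v i j) P s * Delta (w j) P s) 0 t) <=
     (2 * Kv * ((2 / ra) ^ P / (2 / ra - 1))) * (2 * (Kw / rb ^ P))).
  { apply RInt_bound; auto. intros y Hy. apply abs_prod_le.
    apply (dSS_bound ra ra_b); auto. intros; apply CBv; auto.
    apply Delta_bound; auto. apply CBw; auto. apply (Kp_nonneg rb rb_b); auto. }
  eapply Rle_trans. unfold Rminus. eapply Rle_trans; [apply Rabs_triang|]. rewrite Rabs_Ropp.
  apply Rplus_le_compat; [apply B1|apply B2].
  right. unfold CL, rL. unfold Rdiv. rewrite !Rpow_mult_distr, !pow_inv, Rpow_mult_distr.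
  field. repeat split; try apply pow_nonzero; lra. Qed.
End Conv.

Lemma Lip_Rint L (f df g dg : R -> R) M : PA L f df -> PA L g dg -> 0 <= M ->
  (forall x, 0 <= x <= 1 -> Rabs (f x * dg x) <= M) -> Lip01 (fun t => Rint (fun s => f s * dg s) 0 t).
Proof. intros Hf Hg HM HB. exists M. split; auto. intros s t Hs Ht.
  rewrite !Rint_eq by (eapply PA_int_ex1; eauto).
  apply RInt_lip; auto; eapply PA_int_ex1; eauto. Qed.

Section Conv2.
Variables (a b : R) (Ha : 0 < a < 1) (Hb : 0 < b < 1) (Hab : 1 < a + b).
Variables (n d : nat) (v : nat -> nat -> R -> R) (w : nat -> R -> R) (Kv Kw : R).
Hypothesis HV : mat_holder n d a v Kv.
Hypothesis HW : vec_holder d b w Kw.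

Let ra := Rpower 2 a.
Let rb := Rpower 2 b.

Lemma Sinc P i t : (i < n)%nat -> 0 <= t <= 1 ->
  Rabs (Spart d v w (S P) i t - Spart d v w P i t) <= (INR d * (2 * Kv * Kw)) * (/ (ra * rb)) ^ P.
Proof. intros Hi Ht. unfold Spart. cbn [fsum].
  replace (_ + _ - _) with (/ 2 * fsum d (fun j => Delta (v i j) (S P) t * Delta (w j) (S P) t)) by ring.
  pose proof (ra_b a Ha) as Ra. pose proof (rb_b b Hb) as Rb. fold ra rb in Ra, Rb.
  pose proof (Kv_nn a n d v Kv HV). pose proof (Kw_nn b d w Kw HW).
  rewrite Rabs_mult, Rabs_right by lra.
  replace (INR d * (2 * Kv * Kw) * (/ (ra * rb)) ^ P) with (/ 2 * (INR d * (4 * Kv * Kw * (/ (ra * rb)) ^ P))) by field.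
  apply Rmult_le_compat_l; [lra|].
  eapply Rle_trans; [apply fsum_abs|]. rewrite <- fsum_const. apply fsum_le. intros j Hj.
  eapply Rle_trans. apply abs_prod_le.
  apply (Delta_bound _ _ (Kv / ra ^ S P)); auto. apply (CBv a Ha n d v Kv HV); auto. apply (Kp_nonneg ra Ra); auto.
  apply (Delta_bound _ _ (Kw / rb ^ S P)); auto. apply (CBw b Hb d w Kw HW); auto. apply (Kp_nonneg rb Rb); auto.
  assert (0 < ra ^ P) by (apply pow_lt; lra). assert (0 < rb ^ P) by (apply pow_lt; lra).
  rewrite pow_inv, Rpow_mult_distr. simpl pow.
  replace (2 * (Kv / (ra * ra ^ P)) * (2 * (Kw / (rb * rb ^ P)))) with
     ((4 * Kv * Kw * / (ra ^ P * rb ^ P)) * / (ra * rb)) by (field; repeat split; lra).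
  rewrite <- (Rmult_1_r (4 * Kv * Kw * / (ra ^ P * rb ^ P))) at 2.
  apply Rmult_le_compat_l. apply Rmult_le_pos. nra. left; apply Rinv_0_lt_compat; nra.
  rewrite <- Rinv_1. apply Rinv_le_contravar; nra. Qed.

Definition CP := 2 * Kw * (ra * Kv + 2 * Kv / (1 - / ra)).

Lemma Pinc P i t : (i < n)%nat -> 0 <= t <= 1 ->
  Rabs (Ppart d v w (S P) i t - Ppart d v w P i t) <= (INR d * CP) * (/ rb) ^ P.
Proof. intros Hi Ht. unfold Ppart. cbn [fsum].
  replace (_ + _ - _) with (fsum d (fun j => SS (v i j) P t * Delta (w j) P t)) by ring.
  pose proof (ra_b a Ha) as Ra. pose proof (rb_b b Hb) as Rb. fold ra rb in Ra, Rb.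
  pose proof (Kv_nn a n d v Kv HV). pose proof (Kw_nn b d w Kw HW).
  eapply Rle_trans; [apply fsum_abs|]. rewrite Rmult_assoc, <- fsum_const. apply fsum_le. intros j Hj.
  eapply Rle_trans. apply abs_prod_le.
  apply (SS_bound ra Ra _ Kv); auto. intros; apply (CBv a Ha n d v Kv HV); auto.
  apply (Delta_bound _ _ (Kw / rb ^ P)); auto. apply (CBw b Hb d w Kw HW); auto. apply (Kp_nonneg rb Rb); auto.
  pose proof (v0b a Ha n d v Kv HV i j Hi Hj). fold ra in H1.
  assert (0 <= 2 * Kv / (1 - / ra)).
  { apply Rmult_le_pos; [lra|]. left. apply Rinv_0_lt_compat. pose proof (inv_rho_lt1 ra Ra). lra. }
  unfold CP. rewrite pow_inv.
  replace (2 * Kw * (ra * Kv + 2 * Kv / (1 - / ra)) * / rb ^ P) with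
    ((ra * Kv + 2 * Kv / (1 - / ra)) * (2 * (Kw / rb ^ P))) by (unfold Rdiv; ring).
  assert (0 <= Kw / rb ^ P) by (apply (Kp_nonneg rb Rb); auto).
  apply Rmult_le_compat_r; lra. Qed.

Lemma CL_nn : 0 <= CL a b Kv Kw.
Proof. unfold CL. pose proof (Kv_nn a n d v Kv HV). pose proof (Kw_nn b d w Kw HW).
  pose proof (two_rho_gt1 _ (ra_b a Ha)). pose proof (two_rho_gt1 _ (rb_b b Hb)).
  assert (0 < / (2 / Rpower 2 b - 1)) by (apply Rinv_0_lt_compat; lra).
  assert (0 < / (2 / Rpower 2 a - 1)) by (apply Rinv_0_lt_compat; lra).
  apply Rmult_le_pos; [nra|lra]. Qed.

Lemma conv_all : exists Lf Sf Pf : nat -> R -> R,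
  unif_cv01 n (fun P => Lpart d v w P) Lf /\ unif_cv01 n (fun P => Spart d v w P) Sf /\
  unif_cv01 n (fun P => Ppart d v w P) Pf.
Proof.
  pose proof (ra_b a Ha) as Ra. pose proof (rb_b b Hb) as Rb. fold ra rb in Ra, Rb.
  pose proof (Kv_nn a n d v Kv HV). pose proof (Kw_nn b d w Kw HW). pose proof (pos_INR d).
  pose proof (inv_rho_lt1 rb Rb). pose proof (inv_rho_lt1 (ra * rb)). 
  assert (/ (ra * rb) < 1) by (rewrite <- Rinv_1; apply Rinv_lt_contravar; nra).
  destruct (cauchy_unif n (fun P => Lpart d v w P) (INR d * CL a b Kv Kw) (rL a b)) as [Lf [HL _]].
  apply Rmult_le_pos; auto. apply CL_nn. apply rL_b; auto.
  intros; apply (Linc a b Ha Hb Hab n d v w Kv Kw HV HW); auto.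
  destruct (cauchy_unif n (fun P => Spart d v w P) (INR d * (2 * Kv * Kw)) (/ (ra * rb))) as [Sf [HS _]].
  apply Rmult_le_pos; auto. nra. split; [left; apply Rinv_0_lt_compat; nra| auto].
  intros; apply Sinc; auto.
  destruct (cauchy_unif n (fun P => Ppart d v w P) (INR d * CP) (/ rb)) as [Pf [HP _]].
  apply Rmult_le_pos; auto. unfold CP.
  assert (0 <= 2 * Kv / (1 - / ra)).
  { apply Rmult_le_pos; [lra|]. left. apply Rinv_0_lt_compat. pose proof (inv_rho_lt1 ra Ra). lra. }
  apply Rmult_le_pos; nra. split; [left; apply Rinv_0_lt_compat; lra| auto].
  intros; apply Pinc; auto.
  exists Lf, Sf, Pf. auto. Qed.

Lemma Iapprox_cont N i : (i < n)%nat -> cont01 (Iapprox d v w N i).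
Proof. intros Hi. apply Lip01_cont. unfold Iapprox.
  apply (Lip01_fsum d (fun j t => Rint (fun s => SS (v i j) (S N) s * dSS (w j) (S N) s) 0 t)).
  intros j Hj.
  pose proof (ra_b a Ha) as Ra. pose proof (rb_b b Hb) as Rb. fold ra rb in Ra, Rb.
  pose proof (Kv_nn a n d v Kv HV). pose proof (Kw_nn b d w Kw HW).
  pose proof (two_rho_gt1 _ Rb).
  assert (0 <= 2 * Kv / (1 - / ra)).
  { apply Rmult_le_pos; [lra|]. left. apply Rinv_0_lt_compat. pose proof (inv_rho_lt1 ra Ra). lra. }
  assert (0 <= 2 * Kw * ((2 / rb) ^ S N / (2 / rb - 1))).
  { apply Rmult_le_pos; [lra|]. apply Rmult_le_pos. apply pow_le; lra. left; apply Rinv_0_lt_compat; lra. }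
  apply (Lip_Rint (S N) _ (dSS (v i j) (S N)) (SS (w j) (S N)) _
     ((Rabs (v i j 0) + 2 * Kv / (1 - / ra)) * (2 * Kw * ((2 / rb) ^ S N / (2 / rb - 1))))).
  apply PA_SS; lia. apply PA_SS; lia. pose proof (Rabs_pos (v i j 0)). apply Rmult_le_pos; lra.
  intros x Hx. apply abs_prod_le.
  apply (SS_bound ra Ra _ Kv); auto. intros; apply (CBv a Ha n d v Kv HV); auto.
  apply (dSS_bound rb Rb); auto. intros; apply (CBw b Hb d w Kw HW); auto. Qed.

Lemma conv_main : exists I Lf Sf Pf : nat -> R -> R,
      unif_cv01 n (fun N => Iapprox d v w N) I /\
      pw_cv01 n (fun P => Lpart d v w P) Lf /\
      pw_cv01 n (fun P => Spart d v w P) Sf /\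
      pw_cv01 n (fun P => Ppart d v w P) Pf /\
      (forall i t, (i < n)%nat -> 0 <= t <= 1 -> I i t = Lf i t + Sf i t + Pf i t) /\
      vec_cont01 n I /\
      vec_cont01 n (fun i t => I i t - Pf i t).
Proof. destruct conv_all as [Lf [Sf [Pf [HL [HS HP]]]]].
  set (I := fun i t => Lf i t + Sf i t + Pf i t).
  assert (HI : unif_cv01 n (fun N => Iapprox d v w N) I).
  { apply (unif_sum3 n (fun N => Lpart d v w (S N)) (fun N => Spart d v w N) (fun N => Ppart d v w (S N))).
    apply (unif_shift n (fun P => Lpart d v w P)); auto. auto. apply (unif_shift n (fun P => Ppart d v w P)); auto.
    intros; apply Iapprox_identity; auto. }
  assert (CI : vec_cont01 n I).
  { apply (unif_cont n (fun N => Iapprox d v w N)); auto. intros; apply Iapprox_cont; auto. }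
  assert (CP' : vec_cont01 n Pf).
  { apply (unif_cont n (fun P => Ppart d v w P)); auto. intros; apply Lip01_cont, Lip01_Ppart. }
  exists I, Lf, Sf, Pf. repeat split; try apply unif_pw; auto.
  intros i Hi. apply cont01_minus; auto. Qed.
End Conv2.

Lemma fsum_abs_mul_le d (x y : nat -> R) A B :
  fsum d (fun j => Rabs (x j)) <= A -> (forall j, (j < d)%nat -> Rabs (y j) <= B) -> 0 <= B ->
  Rabs (fsum d (fun j => x j * y j)) <= A * B.
Proof. intros H1 H2 HB. eapply Rle_trans; [apply fsum_mul_max; eauto|]. apply Rmult_le_compat_r; auto. Qed.

Section Hold.
Variables (a b : R) (Ha : 0 < a < 1) (Hb : 0 < b < 1) (Hab : 1 < a + b).
Variables (n d : nat) (v : nat -> nat -> R -> R) (w : nat -> R -> R) (Kv Kw : R).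
Hypothesis HV : mat_holder n d a v Kv.
Hypothesis HW : vec_holder d b w Kw.

Definition ra := Rpower 2 a.
Definition rb := Rpower 2 b.
Definition tau := / (ra * rb).
Lemma Ra : 1 < ra < 2. Proof. apply Rp_bounds; auto. Qed.
Lemma Rb : 1 < rb < 2. Proof. apply Rp_bounds; auto. Qed.
Lemma Kvp : 0 <= Kv. Proof. apply (mat_K n d a v Kv HV). Qed.
Lemma Kwp : 0 <= Kw. Proof. apply (vec_K d b w Kw HW). Qed.
Lemma tau_b : 0 < tau /\ 2 * tau < 1 /\ 1 < 4 * tau.
Proof. unfold tau. pose proof (Rp_prod a b Hab). fold ra rb in H. pose proof Ra. pose proof Rb.
  assert (0 < ra * rb) by nra. repeat split.
  apply Rinv_0_lt_compat; auto.
  apply (Rmult_lt_reg_r (ra * rb)); auto. rewrite Rmult_assoc, Rinv_l; lra.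
  apply (Rmult_lt_reg_r (ra * rb)); auto. rewrite Rmult_assoc, Rinv_l; nra. Qed.

Definition Ha_ := Hc ra.
Definition Hb_ := Hc rb.
Definition Va_ := Vc ra.

Lemma adj_v i r k : (i < n)%nat -> (k < 2 ^ r)%nat ->
  fsum d (fun j => Rabs (v i j (gp r (S k)) - v i j (gp r k))) <= Ha_ * Kv / ra ^ r.
Proof. intros Hi Hk. apply (HC_adj ra Ra d (v i) Kv r k); auto. apply (mat_FH n d a v Kv i Ha HV Hi). apply Kvp. Qed.

Lemma adj_w j r k : (j < d)%nat -> (k < 2 ^ r)%nat ->
  Rabs (w j (gp r (S k)) - w j (gp r k)) <= Hb_ * Kw / rb ^ r.
Proof. intros Hj Hk. pose proof (HC_adj rb Rb 1 (fun _ => w j) Kw r k (vec_FH d b w Kw j Hb HW Hj) Kwp Hk).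
  simpl in H. rewrite Rplus_0_l in H. auto. Qed.

Lemma sup_v i r k : (i < n)%nat -> (1 <= r)%nat -> (k <= 2 ^ r)%nat ->
  fsum d (fun j => Rabs (v i j (gp r k))) <= Va_ * Kv.
Proof. intros Hi Hr Hk. apply (HC_sup ra Ra d (v i) Kv r k); auto. apply (mat_FH n d a v Kv i Ha HV Hi). apply Kvp. Qed.

Lemma sup0_v i r k : (i < n)%nat -> (1 <= r)%nat -> (k <= 2 ^ r)%nat ->
  fsum d (fun j => Rabs (v i j (gp r k) - v i j 0)) <= 2 * Kv / (1 - / ra).
Proof. intros Hi Hr Hk. apply (HC_sup0 ra Ra d (v i) Kv r k); auto. apply (mat_FH n d a v Kv i Ha HV Hi). apply Kvp. Qed.

Definition Tr i x y := fsum d (fun j => (v i j x + v i j y) / 2 * (w j y - w j x)).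
Definition Edef M i x y := Iapprox d v w M i y - Iapprox d v w M i x - Tr i x y.

Lemma Edef_base M i k : (k < 2 ^ S M)%nat -> Edef M i (gp (S M) k) (gp (S M) (S k)) = 0.
Proof. intros Hk. unfold Edef, Tr, Iapprox. rewrite <- fsum_minus, <- fsum_minus.
  apply fsum_zero'. intros j Hj.
  assert (P1 : PA (S M) (SS (v i j) (S M)) (dSS (v i j) (S M))) by (apply PA_SS; lia).
  assert (P2 : PA (S M) (SS (w j) (S M)) (dSS (w j) (S M))) by (apply PA_SS; lia).
  assert (Hx : 0 <= gp (S M) k <= 1) by (split; [apply gp_nonneg|apply gp_le1; lia]).
  assert (Hy : 0 <= gp (S M) (S k) <= 1) by (split; [apply gp_nonneg|apply gp_le1; lia]).
  rewrite !Rint_eq by (eapply PA_int_ex1; eauto).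
  rewrite RInt_diff by (eapply PA_int_ex1; eauto).
  rewrite (isR_unique _ _ _ _ (PA_trap _ _ _ _ _ k P1 P2 Hk)).
  rewrite !SS_interp by lia. ring. Qed.

Definition Dc := Ha_ * Hb_ * Kv * Kw.

Lemma delta_bound i r k : (i < n)%nat -> (k < 2 ^ r)%nat ->
  Rabs (Tr i (gp (S r) (2 * k)) (gp (S r) (S (2 * k))) + Tr i (gp (S r) (S (2 * k))) (gp (S r) (S (S (2 * k))))
        - Tr i (gp (S r) (2 * k)) (gp (S r) (S (S (2 * k))))) <= Dc * tau ^ S r.
Proof. intros Hi Hk. set (x := gp (S r) (2 * k)). set (c := gp (S r) (S (2 * k))). set (y := gp (S r) (S (S (2 * k)))).
  unfold Tr. rewrite <- fsum_plus, <- fsum_minus.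
  rewrite (fsum_ext d _ (fun j => / 2 * ((v i j c - v i j y) * (w j c - w j x)) + / 2 * ((v i j c - v i j x) * (w j y - w j c)))) by (intros; field).
  rewrite fsum_plus, !fsum_scal.
  pose proof Kvp. pose proof Kwp. pose proof Ra. pose proof Rb.
  assert (B1 : Rabs (fsum d (fun j => (v i j c - v i j y) * (w j c - w j x))) <= (Ha_ * Kv / ra ^ S r) * (Hb_ * Kw / rb ^ S r)).
  { apply fsum_abs_mul_le.
    - rewrite (fsum_ext d _ (fun j => Rabs (v i j y - v i j c))) by (intros; apply Rabs_minus_sym).
      apply adj_v; auto; simpl; lia.
    - intros j Hj. apply adj_w; auto; simpl; lia.
    - unfold Rdiv. apply Rmult_le_pos. apply Rmult_le_pos; auto. unfold Hb_. pose proof (Hc_pos rb Rb). lra.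
      left; apply Rinv_0_lt_compat, pow_lt; lra. }
  assert (B2 : Rabs (fsum d (fun j => (v i j c - v i j x) * (w j y - w j c))) <= (Ha_ * Kv / ra ^ S r) * (Hb_ * Kw / rb ^ S r)).
  { apply fsum_abs_mul_le.
    - apply adj_v; auto; simpl; lia.
    - intros j Hj. apply adj_w; auto; simpl; lia.
    - unfold Rdiv. apply Rmult_le_pos. apply Rmult_le_pos; auto. unfold Hb_. pose proof (Hc_pos rb Rb). lra.
      left; apply Rinv_0_lt_compat, pow_lt; lra. }
  replace (Dc * tau ^ S r) with (/ 2 * ((Ha_ * Kv / ra ^ S r) * (Hb_ * Kw / rb ^ S r)) + / 2 * ((Ha_ * Kv / ra ^ S r) * (Hb_ * Kw / rb ^ S r))).
  eapply Rle_trans; [apply Rabs_triang|]. rewrite !Rabs_mult, (Rabs_right (/ 2)) by lra.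
  apply Rplus_le_compat; apply Rmult_le_compat_l; lra.
  unfold Dc, tau. rewrite pow_inv, Rpow_mult_distr. field. split; apply pow_nonzero; lra. Qed.

Definition KEc := Ha_ * Hb_ * tau / (1 - 2 * tau).
Definition KE := KEc * Kv * Kw.

Lemma KE_eq : KE * (1 - 2 * tau) = Dc * tau.
Proof. unfold KE, KEc, Dc. pose proof tau_b. field. lra. Qed.

Lemma KE_nn : 0 <= KE.
Proof. pose proof tau_b. pose proof Kvp. pose proof Kwp. pose proof (Hc_pos ra Ra). pose proof (Hc_pos rb Rb).
  unfold KE, KEc, Ha_, Hb_. apply Rmult_le_pos; [apply Rmult_le_pos|]; auto.
  unfold Rdiv. apply Rmult_le_pos. apply Rmult_le_pos; [nra|lra]. left; apply Rinv_0_lt_compat; lra. Qed.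

Lemma Edef_bound M i : (i < n)%nat -> forall nl r k, (r + nl = S M)%nat -> (k < 2 ^ r)%nat ->
  Rabs (Edef M i (gp r k) (gp r (S k))) <= KE * tau ^ r.
Proof. intros Hi nl. induction nl; intros r k Hr Hk.
  - rewrite Nat.add_0_r in Hr. subst r. rewrite Edef_base by auto. rewrite Rabs_R0.
    apply Rmult_le_pos. apply KE_nn. apply pow_le. pose proof tau_b; lra.
  - assert (E1 := IHnl (S r) (2 * k)%nat ltac:(lia) ltac:(simpl; lia)).
    assert (E2 := IHnl (S r) (S (2 * k)) ltac:(lia) ltac:(simpl; lia)).
    pose proof (delta_bound i r k Hi Hk) as DB.
    rewrite <- (gp_S r k), <- (gp_S r (S k)). replace (2 * S k)%nat with (S (S (2 * k))) by lia.
    unfold Edef in *.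
    set (x := gp (S r) (2 * k)) in *. set (c := gp (S r) (S (2 * k))) in *. set (y := gp (S r) (S (S (2 * k)))) in *.
    replace (Iapprox d v w M i y - Iapprox d v w M i x - Tr i x y) with
      ((Iapprox d v w M i c - Iapprox d v w M i x - Tr i x c) + (Iapprox d v w M i y - Iapprox d v w M i c - Tr i c y)
       + (Tr i x c + Tr i c y - Tr i x y)) by ring.
    eapply Rle_trans. eapply Rle_trans; [apply Rabs_triang|]. apply Rplus_le_compat; [apply Rabs_triang|apply DB].
    pose proof KE_eq as KQ. 
    assert (KE = 2 * KE * tau + Dc * tau) as KQ' by (rewrite <- KQ; ring).
    assert (KE * tau ^ r = KE * tau ^ S r + KE * tau ^ S r + Dc * tau ^ S r) as KQ''.
    { simpl pow. rewrite KQ' at 1. ring. }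
    rewrite KQ''. lra. Qed.

Variable I : nat -> R -> R.
Hypothesis HI : forall i t, (i < n)%nat -> 0 <= t <= 1 -> Un_cv (fun N => Iapprox d v w N i t) (I i t).

Lemma Einf_bound i r k : (i < n)%nat -> (k < 2 ^ r)%nat ->
  Rabs (I i (gp r (S k)) - I i (gp r k) - Tr i (gp r k) (gp r (S k))) <= KE * tau ^ r.
Proof. intros Hi Hk.
  assert (Hx : 0 <= gp r k <= 1) by (split; [apply gp_nonneg|apply gp_le1; lia]).
  assert (Hy : 0 <= gp r (S k) <= 1) by (split; [apply gp_nonneg|apply gp_le1; lia]).
  assert (CV : Un_cv (fun M => Edef M i (gp r k) (gp r (S k))) (I i (gp r (S k)) - I i (gp r k) - Tr i (gp r k) (gp r (S k)))).
  { unfold Edef. apply CV_minus. apply CV_minus; apply HI; auto.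
    intros eps He. exists 0%nat. intros; unfold R_dist. rewrite Rminus_diag, Rabs_R0; auto. }
  replace (I i (gp r (S k)) - I i (gp r k) - Tr i (gp r k) (gp r (S k))) with
     ((I i (gp r (S k)) - I i (gp r k) - Tr i (gp r k) (gp r (S k))) - 0) by ring.
  apply (lim_le _ _ _ _ r CV). intros M HM. rewrite Rminus_0_r.
  apply (Edef_bound M i Hi (S M - r)); auto; lia. Qed.

Lemma I_at0 i : (i < n)%nat -> I i 0 = 0.
Proof. intros Hi. apply (UL_sequence (fun N => Iapprox d v w N i 0)). apply HI; auto; lra.
  assert (E : forall N, Iapprox d v w N i 0 = 0).
  { intros N. unfold Iapprox. apply fsum_zero'. intros j _. rewrite Rint_eq. apply (RInt_point (V := R_CompleteNormedModule)).
    exists 0. apply isR_point. }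
  intros eps He. exists 0%nat. intros. unfold R_dist. rewrite E, Rminus_diag, Rabs_R0; auto. Qed.

Lemma Tr_gen i x y Bw : fsum d (fun j => Rabs (v i j x)) <= Va_ * Kv -> fsum d (fun j => Rabs (v i j y)) <= Va_ * Kv ->
  (forall j, (j < d)%nat -> Rabs (w j y - w j x) <= Bw) -> 0 <= Bw -> Rabs (Tr i x y) <= Va_ * Kv * Bw.
Proof. intros H1 H2 H3 H4. unfold Tr. apply fsum_abs_mul_le; auto.
  eapply Rle_trans. apply (fsum_le _ _ (fun j => / 2 * (Rabs (v i j x) + Rabs (v i j y)))).
  intros j _. unfold Rdiv. rewrite Rabs_mult, (Rabs_right (/2)) by lra. rewrite Rmult_comm.
  apply Rmult_le_compat_l; [lra| apply Rabs_triang].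
  rewrite fsum_scal, fsum_plus. lra. Qed.

Lemma Va_pos : 0 < Va_. Proof. apply Vc_pos, Ra. Qed.
Lemma Ha_pos : 1 <= Ha_. Proof. apply Hc_pos, Ra. Qed.
Lemma Hb_pos : 1 <= Hb_. Proof. apply Hc_pos, Rb. Qed.
Lemma KEc_nn : 0 <= KEc.
Proof. pose proof tau_b. pose proof Ha_pos. pose proof Hb_pos. unfold KEc.
  unfold Rdiv. apply Rmult_le_pos. apply Rmult_le_pos; [nra|lra]. left; apply Rinv_0_lt_compat; lra. Qed.

Lemma invrb_le q : / rb ^ S q <= / rb ^ q.
Proof. pose proof Rb. apply Rinv_le_contravar. apply pow_lt; lra. simpl. assert (0 < rb ^ q) by (apply pow_lt; lra). nra. Qed.

Lemma tau_le_rb q : tau ^ q <= / rb ^ q.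
Proof. pose proof Ra. pose proof Rb. unfold tau. rewrite pow_inv, Rpow_mult_distr.
  apply Rinv_le_contravar. apply pow_lt; lra. assert (1 <= ra ^ q) by (apply pow_R1_Rle; lra).
  assert (0 < rb ^ q) by (apply pow_lt; lra). nra. Qed.

Lemma tauS_le q : tau ^ S q <= tau ^ q.
Proof. pose proof tau_b. simpl. assert (0 <= tau ^ q) by (apply pow_le; lra). nra. Qed.

Definition CI := 4 * Va_ * Hb_ + 4 * KEc.

Lemma gp_t0 q m : (1 <= m)%nat -> t0 q m = gp (S q) (2 * (m - 1)).
Proof. intros. rewrite gp_S. reflexivity. Qed.
Lemma gp_t1 q m : (1 <= m)%nat -> t1 q m = gp (S q) (S (2 * (m - 1))).
Proof. intros. rewrite t1_gp by auto. f_equal. lia. Qed.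
Lemma gp_t2 q m : (1 <= m)%nat -> t2 q m = gp (S q) (S (S (2 * (m - 1)))).
Proof. intros. replace (S (S (2 * (m - 1)))) with (2 * m)%nat by lia. rewrite gp_S. reflexivity. Qed.

Lemma coefI_bound i q m : (i < n)%nat -> (m <= 2 ^ q)%nat ->
  Rabs (coef (I i) q m) <= CI * Kv * Kw / rb ^ q.
Proof. intros Hi Hm. pose proof Kvp. pose proof Kwp. pose proof Va_pos. pose proof Hb_pos. pose proof KEc_nn.
  pose proof Rb. pose proof tau_b.
  assert (0 < / rb ^ q) by (apply Rinv_0_lt_compat, pow_lt; lra).
  assert (0 <= Kv * Kw) by nra.
  destruct m as [|m'].
  - destruct q.
    + unfold coef. pose proof (Einf_bound i 0 0 Hi ltac:(simpl; lia)) as EB.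
      replace (gp 0 1) with 1 in EB by (unfold gp; simpl; lra). replace (gp 0 0) with 0 in EB by (unfold gp; simpl; lra).
      assert (TB : Rabs (Tr i 0 1) <= Va_ * Kv * (Hb_ * Kw)).
      { apply Tr_gen.
        replace 0 with (gp 1 0) by (unfold gp; simpl; lra). apply sup_v; auto; simpl; lia.
        replace 1 with (gp 1 2) by (unfold gp; simpl; lra). apply sup_v; auto; simpl; lia.
        intros j Hj. pose proof (adj_w j 0 0 Hj ltac:(simpl; lia)) as AW.
        replace (gp 0 1) with 1 in AW by (unfold gp; simpl; lra). replace (gp 0 0) with 0 in AW by (unfold gp; simpl; lra).
        simpl in AW. lra. nra. }
      simpl in EB. simpl. unfold CI, KE in *.
      replace (I i 1 - I i 0) with ((I i 1 - I i 0 - Tr i 0 1) + Tr i 0 1) by ring.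
      eapply Rle_trans; [apply Rabs_triang|]. rewrite Rmult_1_r in EB.
      replace ((4 * Va_ * Hb_ + 4 * KEc) * Kv * Kw / 1) with (4 * (Va_ * Hb_ * (Kv * Kw)) + 4 * (KEc * Kv * Kw)) by field.
      replace (Va_ * Kv * (Hb_ * Kw)) with (Va_ * Hb_ * (Kv * Kw)) in TB by ring.
      assert (0 <= KEc * Kv * Kw) by (apply Rmult_le_pos; nra). assert (0 <= Va_ * Hb_ * (Kv * Kw)) by (apply Rmult_le_pos; nra). lra.
    + unfold coef. rewrite Rabs_R0. unfold Rdiv. apply Rmult_le_pos; [|lra].
      unfold CI. assert (0 <= 4 * Va_ * Hb_ + 4 * KEc) by nra. nra.
  - unfold coef. rewrite (gp_t0 q (S m')), (gp_t1 q (S m')), (gp_t2 q (S m')) by lia.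
    replace (S m' - 1)%nat with m' by lia.
    set (k := (2 * m')%nat).
    assert (Hk1 : (k < 2 ^ S q)%nat) by (unfold k; simpl; lia).
    assert (Hk2 : (S k < 2 ^ S q)%nat) by (unfold k; simpl; lia).
    pose proof (Einf_bound i (S q) k Hi Hk1) as E1. pose proof (Einf_bound i (S q) (S k) Hi Hk2) as E2.
    assert (T1 : Rabs (Tr i (gp (S q) k) (gp (S q) (S k))) <= Va_ * Kv * (Hb_ * Kw / rb ^ S q)).
    { apply Tr_gen. apply sup_v; auto; lia. apply sup_v; auto; lia.
      intros; apply adj_w; auto. unfold Rdiv; apply Rmult_le_pos; [nra| left; apply Rinv_0_lt_compat, pow_lt; lra]. }
    assert (T2 : Rabs (Tr i (gp (S q) (S k)) (gp (S q) (S (S k)))) <= Va_ * Kv * (Hb_ * Kw / rb ^ S q)).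
    { apply Tr_gen. apply sup_v; auto; lia. apply sup_v; auto; simpl; unfold k; lia.
      intros; apply adj_w; auto. unfold Rdiv; apply Rmult_le_pos; [nra| left; apply Rinv_0_lt_compat, pow_lt; lra]. }
    set (A1 := I i (gp (S q) (S k)) - I i (gp (S q) k) - Tr i (gp (S q) k) (gp (S q) (S k))) in *.
    set (A2 := I i (gp (S q) (S (S k))) - I i (gp (S q) (S k)) - Tr i (gp (S q) (S k)) (gp (S q) (S (S k)))) in *.
    replace (2 * I i (gp (S q) (S k)) - I i (gp (S q) k) - I i (gp (S q) (S (S k)))) with
      (A1 - A2 + Tr i (gp (S q) k) (gp (S q) (S k)) - Tr i (gp (S q) (S k)) (gp (S q) (S (S k)))) by (unfold A1, A2; ring).
    pose proof (tau_le_rb q). pose proof (tauS_le q). pose proof (invrb_le q).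
    assert (Rabs A1 <= KE * / rb ^ q).
    { eapply Rle_trans; [apply E1|]. apply Rmult_le_compat_l. apply KE_nn. lra. }
    assert (Rabs A2 <= KE * / rb ^ q).
    { eapply Rle_trans; [apply E2|]. apply Rmult_le_compat_l. apply KE_nn. lra. }
    assert (Va_ * Kv * (Hb_ * Kw / rb ^ S q) <= Va_ * Hb_ * (Kv * Kw) * / rb ^ q).
    { unfold Rdiv. replace (Va_ * Kv * (Hb_ * Kw * / rb ^ S q)) with (Va_ * Hb_ * (Kv * Kw) * / rb ^ S q) by ring.
      apply Rmult_le_compat_l. apply Rmult_le_pos; [apply Rmult_le_pos; lra| lra]. auto. }
    assert (Rabs (A1 - A2 + Tr i (gp (S q) k) (gp (S q) (S k)) - Tr i (gp (S q) (S k)) (gp (S q) (S (S k))))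
       <= Rabs A1 + Rabs A2 + Rabs (Tr i (gp (S q) k) (gp (S q) (S k))) + Rabs (Tr i (gp (S q) (S k)) (gp (S q) (S (S k))))).
    { rabs. }
    unfold CI, KE in *. unfold Rdiv.
    replace ((4 * Va_ * Hb_ + 4 * KEc) * Kv * Kw * / rb ^ q) with
      (4 * (Va_ * Hb_ * (Kv * Kw) * / rb ^ q) + 4 * (KEc * Kv * Kw * / rb ^ q)) by ring.
    assert (0 <= Va_ * Hb_ * (Kv * Kw) * / rb ^ q) by (apply Rmult_le_pos; [apply Rmult_le_pos; [apply Rmult_le_pos; lra|lra]|lra]).
    assert (0 <= KEc * Kv * Kw * / rb ^ q) by (apply Rmult_le_pos; [apply Rmult_le_pos; [apply Rmult_le_pos; lra|lra]|lra]).
    lra. Qed.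

Lemma CI_nn : 0 <= CI.
Proof. pose proof Va_pos. pose proof Hb_pos. pose proof KEc_nn. unfold CI. nra. Qed.

Lemma vnorm_zero n0 f : (forall i, (i < n0)%nat -> f i = 0) -> vnorm n0 f = 0.
Proof. intros H. unfold vnorm. apply Rle_antisym. apply fmax_le; [lra|]. intros m Hm. rewrite H; auto. rewrite Rabs_R0; lra.
  apply fmax_nonneg. Qed.

Lemma holder_I C : CI <= C -> vec_holder n b I (C * Kv * Kw).
Proof. intros HC. pose proof Kvp. pose proof Kwp. pose proof CI_nn. split.
  - rewrite vnorm_zero by (intros; apply I_at0; auto). rewrite Rmult_0_r. apply Rmult_le_pos; [apply Rmult_le_pos|]; lra.
  - intros p m Hm. rewrite Rp_pow. fold rb. pose proof Rb. assert (0 < rb ^ p) by (apply pow_lt; lra).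
    apply (Rmult_le_reg_r (/ rb ^ p)). apply Rinv_0_lt_compat; auto.
    rewrite Rmult_comm, <- Rmult_assoc, Rinv_l, Rmult_1_l by lra.
    unfold vnorm. apply fmax_le. apply Rmult_le_pos. apply Rmult_le_pos; [apply Rmult_le_pos|]; lra. left; apply Rinv_0_lt_compat; auto.
    intros i Hi. eapply Rle_trans. apply coefI_bound; auto. unfold Rdiv.
    apply Rmult_le_compat_r. left; apply Rinv_0_lt_compat; auto.
    rewrite !Rmult_assoc. apply Rmult_le_compat_r; [apply Rmult_le_pos; lra| lra]. Qed.

Variable Pf : nat -> R -> R.
Hypothesis HP : forall i t, (i < n)%nat -> 0 <= t <= 1 -> Un_cv (fun P => Ppart d v w P i t) (Pf i t).

Lemma Ppart_S P i x : Ppart d v w (S P) i x = Ppart d v w P i x + fsum d (fun j => SS (v i j) P x * Delta (w j) P x).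
Proof. reflexivity. Qed.

Lemma Ppart_stable q i x k : x = gp (S q) k -> forall j, Ppart d v w (S q + j) i x = Ppart d v w (S q) i x.
Proof. intros Hx j. induction j. rewrite Nat.add_0_r; auto.
  replace (S q + S j)%nat with (S (S q + j)) by lia. rewrite Ppart_S, IHj.
  rewrite fsum_zero'. ring. intros j' _. rewrite Hx, Delta_grid0 by lia. ring. Qed.

Lemma Pf_grid q i x k : (i < n)%nat -> x = gp (S q) k -> (k <= 2 ^ S q)%nat -> Pf i x = Ppart d v w (S q) i x.
Proof. intros Hi Hx Hk. apply (UL_sequence (fun P => Ppart d v w P i x)). apply HP; auto.
  rewrite Hx; split; [apply gp_nonneg| apply gp_le1; auto].
  intros eps He. exists (S q). intros P HP'. unfold R_dist. replace P with (S q + (P - S q))%nat by lia.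
  rewrite (Ppart_stable q i x k Hx). rewrite Rminus_diag, Rabs_R0; auto. Qed.

Lemma fsum_comb k f1 f0 f2 : 2 * fsum k f1 - fsum k f0 - fsum k f2 = fsum k (fun p => 2 * f1 p - f0 p - f2 p).
Proof. induction k; simpl; [ring|]. rewrite <- IHk. ring. Qed.

Definition CQ := 2 / ((2 / ra - 1) * (4 * tau - 1)).
Definition CJ := 2 * Ha_ * Hb_ + 2 * KEc + CQ + 3 * Hb_ / (1 - / ra).

Lemma pair_bound i r k (s1 s2 : bool) : (i < n)%nat -> (S k < 2 ^ S r)%nat ->
  let x := gp (S r) k in let c := gp (S r) (S k) in let y := gp (S r) (S (S k)) in
  Rabs (fsum d (fun j => / 2 * ((v i j c - v i j y) * (w j c - w j x)) + / 2 * ((v i j x - v i j c) * (w j y - w j c))))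
   <= Dc * tau ^ S r.
Proof. intros Hi Hk x c y.
  rewrite fsum_plus, !fsum_scal.
  pose proof Kvp. pose proof Kwp. pose proof Ra. pose proof Rb.
  assert (B1 : Rabs (fsum d (fun j => (v i j c - v i j y) * (w j c - w j x))) <= (Ha_ * Kv / ra ^ S r) * (Hb_ * Kw / rb ^ S r)).
  { apply fsum_abs_mul_le.
    - rewrite (fsum_ext d _ (fun j => Rabs (v i j y - v i j c))) by (intros; apply Rabs_minus_sym).
      apply adj_v; auto.
    - intros j Hj. apply adj_w; auto; lia.
    - unfold Rdiv. apply Rmult_le_pos. apply Rmult_le_pos; auto. pose proof Hb_pos. lra.
      left; apply Rinv_0_lt_compat, pow_lt; lra. }
  assert (B2 : Rabs (fsum d (fun j => (v i j x - v i j c) * (w j y - w j c))) <= (Ha_ * Kv / ra ^ S r) * (Hb_ * Kw / rb ^ S r)).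
  { apply fsum_abs_mul_le.
    - rewrite (fsum_ext d _ (fun j => Rabs (v i j c - v i j x))) by (intros; apply Rabs_minus_sym).
      apply adj_v; auto; lia.
    - intros j Hj. apply adj_w; auto.
    - unfold Rdiv. apply Rmult_le_pos. apply Rmult_le_pos; auto. pose proof Hb_pos. lra.
      left; apply Rinv_0_lt_compat, pow_lt; lra. }
  replace (Dc * tau ^ S r) with (/ 2 * ((Ha_ * Kv / ra ^ S r) * (Hb_ * Kw / rb ^ S r)) + / 2 * ((Ha_ * Kv / ra ^ S r) * (Hb_ * Kw / rb ^ S r))).
  eapply Rle_trans; [apply Rabs_triang|]. rewrite !Rabs_mult, (Rabs_right (/ 2)) by lra.
  apply Rplus_le_compat; apply Rmult_le_compat_l; lra.
  unfold Dc, tau. rewrite pow_inv, Rpow_mult_distr. field. split; apply pow_nonzero; lra. Qed.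

Lemma CQ_pos : 0 < CQ.
Proof. unfold CQ. pose proof (two_rho_gt1 ra Ra). pose proof tau_b. apply Rdiv_lt_0_compat; nra. Qed.

Lemma Q_bound i q m' : (i < n)%nat -> (m' < 2 ^ q)%nat ->
  Rabs (fsum q (fun p => fsum d (fun j => - / 2 * ((SS (v i j) p (gp q (S m')) - SS (v i j) p (gp q m')) *
        (Delta (w j) p (gp q (S m')) - Delta (w j) p (gp q m')))))) <= CQ * (Kv * Kw) * tau ^ q.
Proof. intros Hi Hm. pose proof Kvp. pose proof Kwp. pose proof Ra. pose proof Rb. pose proof tau_b.
  pose proof (two_rho_gt1 ra Ra) as Tra.
  assert (Hd : Rabs (gp q (S m') - gp q m') = / 2 ^ q).
  { rewrite gp_Sk. replace (gp q m' + / 2 ^ q - gp q m') with (/ 2 ^ q) by ring. apply Rabs_right.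
    left; apply Rinv_0_lt_compat, pow2_pos. }
  set (G := 2 * Kv * Kw / (2 / ra - 1) * (/ 2 ^ q * / 2 ^ q)).
  eapply Rle_trans; [apply fsum_abs|].
  eapply Rle_trans. apply (fsum_le _ _ (fun p => G * (4 * tau) ^ p)).
  - intros p Hp. rewrite fsum_scal, Rabs_mult, Rabs_Ropp, (Rabs_right (/2)) by lra.
    assert (B : Rabs (fsum d (fun j => (SS (v i j) p (gp q (S m')) - SS (v i j) p (gp q m')) *
        (Delta (w j) p (gp q (S m')) - Delta (w j) p (gp q m')))) <=
        (2 * Kv * Rabs (gp q (S m') - gp q m') * ((2 / ra) ^ p / (2 / ra - 1))) * ((Kw / rb ^ p) * (2 * 2 ^ p * Rabs (gp q (S m') - gp q m')))).
    { apply fsum_abs_mul_le.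
      - apply (SS_rowdiff ra Ra d (v i) Kv p); auto. intros p0. apply (mat_FH n d a v Kv i Ha HV Hi).
      - intros j Hj. apply Delta_lip. apply (CBw b Hb d w Kw HW); auto. apply (Kp_nonneg rb Rb); auto.
      - apply Rmult_le_pos. apply (Kp_nonneg rb Rb); auto. rewrite Hd.
        apply Rmult_le_pos. pose proof (pow2_pos p); lra. left; apply Rinv_0_lt_compat, pow2_pos. }
    eapply Rle_trans. apply Rmult_le_compat_l. lra. apply B. rewrite Hd.
    right. unfold G, tau. unfold Rdiv. rewrite !Rpow_mult_distr, !pow_inv, !Rpow_mult_distr.
    replace (4 ^ p) with (2 ^ p * 2 ^ p) by (rewrite <- Rpow_mult_distr; f_equal; ring).
    field. repeat split; try apply pow_nonzero; try lra. 
  - rewrite fsum_scal. pose proof (fsum_geom_gt1 q (4 * tau) ltac:(lra)).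
    assert (0 <= G). { unfold G. apply Rmult_le_pos. unfold Rdiv. apply Rmult_le_pos. nra.
      left; apply Rinv_0_lt_compat; lra. apply Rmult_le_pos; left; apply Rinv_0_lt_compat, pow2_pos. }
    eapply Rle_trans. apply Rmult_le_compat_l. auto. apply H4.
    right. unfold G, CQ. rewrite Rpow_mult_distr.
    replace (4 ^ q) with (2 ^ q * 2 ^ q) by (rewrite <- Rpow_mult_distr; f_equal; ring).
    field. repeat split; try apply pow_nonzero; try lra. Qed.

Lemma CJ_ge : 2 * Ha_ * Hb_ + 2 * KEc + CQ <= CJ /\ 3 * Hb_ / (1 - / ra) <= CJ /\ 0 <= 3 * Hb_ / (1 - / ra).
Proof. pose proof CQ_pos. pose proof KEc_nn. pose proof Ha_pos. pose proof Hb_pos. pose proof (inv_rho_lt1 ra Ra).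
  assert (0 <= 3 * Hb_ / (1 - / ra)) by (unfold Rdiv; apply Rmult_le_pos; [lra| left; apply Rinv_0_lt_compat; lra]).
  unfold CJ. repeat split; nra. Qed.

Lemma coefJ_pos i q m' : (i < n)%nat -> (1 <= q)%nat -> (m' < 2 ^ q)%nat ->
  Rabs (coef (fun t => I i t - Pf i t) q (S m')) <= CJ * (Kv * Kw) * tau ^ q.
Proof. intros Hi Hq Hm. unfold coef.
  change (t0 q (S m')) with (gp q (S m' - 1)). replace (S m' - 1)%nat with m' by lia.
  change (t2 q (S m')) with (gp q (S m')). rewrite (gp_t1 q (S m')) by lia. replace (S m' - 1)%nat with m' by lia.
  set (y0 := gp q m'). set (y1 := gp (S q) (S (2 * m'))). set (y2 := gp q (S m')).
  assert (G0 : y0 = gp (S q) (2 * m')) by (unfold y0; rewrite gp_S; auto).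
  assert (G2 : y2 = gp (S q) (2 * S m')) by (unfold y2; rewrite gp_S; auto).
  assert (HPf0 := Pf_grid q i y0 (2 * m') Hi G0 ltac:(simpl; lia)).
  assert (HPf1 := Pf_grid q i y1 (S (2 * m')) Hi eq_refl ltac:(simpl; lia)).
  assert (HPf2 := Pf_grid q i y2 (2 * S m') Hi G2 ltac:(simpl; lia)).
  rewrite Ppart_S in HPf0, HPf1, HPf2.
  set (A1 := I i y1 - I i y0 - Tr i y0 y1). set (A2 := I i y2 - I i y1 - Tr i y1 y2).
  set (X1 := 2 * Ppart d v w q i y1 - Ppart d v w q i y0 - Ppart d v w q i y2).
  set (X2 := 2 * fsum d (fun j => SS (v i j) q y1 * Delta (w j) q y1) - fsum d (fun j => SS (v i j) q y0 * Delta (w j) q y0)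
              - fsum d (fun j => SS (v i j) q y2 * Delta (w j) q y2)).
  assert (Hc : 2 * (I i y1 - Pf i y1) - (I i y0 - Pf i y0) - (I i y2 - Pf i y2) = A1 - A2 + (Tr i y0 y1 - Tr i y1 y2 - X2) - X1).
  { rewrite HPf0, HPf1, HPf2. unfold A1, A2, X1, X2. ring. }
  rewrite Hc.
  assert (EQ1 : X1 = fsum q (fun p => fsum d (fun j => - / 2 * ((SS (v i j) p y2 - SS (v i j) p y0) *
        (Delta (w j) p y2 - Delta (w j) p y0))))).
  { unfold X1, Ppart. rewrite fsum_comb. apply fsum_ext; intros p Hp. rewrite fsum_comb. apply fsum_ext; intros j Hj.
    assert (PA1 : PA q (SS (v i j) p) (dSS (v i j) p)) by (apply PA_SS; lia).
    assert (PA2 : PA q (Delta (w j) p) (dDelta (w j) p)) by (apply PA_Delta; lia).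
    unfold y1. rewrite (PA_mid q _ _ m' PA1 Hm), (PA_mid q _ _ m' PA2 Hm). fold y0 y2. field. }
  assert (EQ2 : X2 = fsum d (fun j => (v i j y0 + v i j y2) / 2 * (2 * w j y1 - w j y0 - w j y2))).
  { unfold X2. rewrite fsum_comb. apply fsum_ext; intros j Hj.
    assert (PA1 : PA q (SS (v i j) q) (dSS (v i j) q)) by (apply PA_SS; lia).
    unfold y1 at 1. rewrite (PA_mid q _ _ m' PA1 Hm). fold y0 y2.
    assert (y1 = t1 q (S m')) as Y1 by (rewrite gp_t1 by lia; unfold y1; f_equal; lia).
    rewrite Y1, Delta_mid by lia. unfold y0, y2. rewrite !Delta_grid0 by lia.
    rewrite !SS_interp by lia. unfold coef. change (t0 q (S m')) with (gp q (S m' - 1)). replace (S m' - 1)%nat with m' by lia.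
    change (t2 q (S m')) with (gp q (S m')). rewrite <- Y1. field. }
  assert (EQ3 : Tr i y0 y1 - Tr i y1 y2 - fsum d (fun j => (v i j y0 + v i j y2) / 2 * (2 * w j y1 - w j y0 - w j y2))
     = fsum d (fun j => / 2 * ((v i j y1 - v i j y2) * (w j y1 - w j y0)) + / 2 * ((v i j y0 - v i j y1) * (w j y2 - w j y1)))).
  { unfold Tr. rewrite <- !fsum_minus. apply fsum_ext; intros; field. }
  rewrite EQ2, EQ3, EQ1.
  assert (BA1 : Rabs A1 <= KE * tau ^ S q).
  { pose proof (Einf_bound i (S q) (2 * m') Hi ltac:(simpl; lia)) as E. rewrite <- G0 in E. auto. }
  assert (BA2 : Rabs A2 <= KE * tau ^ S q).
  { pose proof (Einf_bound i (S q) (S (2 * m')) Hi ltac:(simpl; lia)) as E.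
    replace (S (S (2 * m'))) with (2 * S m')%nat in E by lia. rewrite <- G2 in E. auto. }
  assert (BM := pair_bound i q (2 * m') true true Hi ltac:(simpl; lia)). cbv zeta in BM.
  replace (S (S (2 * m'))) with (2 * S m')%nat in BM by lia. rewrite <- G0, <- G2 in BM. fold y1 in BM.
  assert (BQ := Q_bound i q m' Hi Hm). fold y0 y2 in BQ.
  set (M := fsum d (fun j => / 2 * ((v i j y1 - v i j y2) * (w j y1 - w j y0)) + / 2 * ((v i j y0 - v i j y1) * (w j y2 - w j y1)))) in *.
  set (Q := fsum q (fun p => fsum d (fun j => - / 2 * ((SS (v i j) p y2 - SS (v i j) p y0) *
        (Delta (w j) p y2 - Delta (w j) p y0))))) in *.
  assert (Rabs (A1 - A2 + M - Q) <= Rabs A1 + Rabs A2 + Rabs M + Rabs Q) by rabs.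
  pose proof (tauS_le q). pose proof KE_nn. pose proof tau_b. pose proof Kvp. pose proof Kwp.
  assert (0 <= tau ^ q) by (apply pow_le; lra). pose proof CJ_ge. pose proof Ha_pos. pose proof Hb_pos.
  assert (KE * tau ^ S q <= KE * tau ^ q) by (apply Rmult_le_compat_l; auto).
  assert (Dc * tau ^ S q <= Dc * tau ^ q) by (apply Rmult_le_compat_l; auto; unfold Dc; apply Rmult_le_pos; [apply Rmult_le_pos|]; nra).
  assert (KE * tau ^ q = KEc * (Kv * Kw) * tau ^ q) by (unfold KE; ring).
  assert (Dc * tau ^ q = Ha_ * Hb_ * (Kv * Kw) * tau ^ q) by (unfold Dc; ring).
  assert (0 <= Kv * Kw * tau ^ q) by (apply Rmult_le_pos; [apply Rmult_le_pos|]; lra).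
  assert ((2 * Ha_ * Hb_ + 2 * KEc + CQ) * (Kv * Kw * tau ^ q) <= CJ * (Kv * Kw * tau ^ q)) by (apply Rmult_le_compat_r; lra).
  assert (Ha_ * Hb_ * (Kv * Kw) * tau ^ q <= 2 * Ha_ * Hb_ * (Kv * Kw * tau ^ q)).
  { replace (Ha_ * Hb_ * (Kv * Kw) * tau ^ q) with ((Ha_ * Hb_) * (Kv * Kw * tau ^ q)) by ring.
    replace (2 * Ha_ * Hb_ * (Kv * Kw * tau ^ q)) with (2 * (Ha_ * Hb_) * (Kv * Kw * tau ^ q)) by ring.
    apply Rmult_le_compat_r; auto. nra. }
  replace (CJ * (Kv * Kw) * tau ^ q) with (CJ * (Kv * Kw * tau ^ q)) by ring.
  replace (CQ * (Kv * Kw) * tau ^ q) with (CQ * (Kv * Kw * tau ^ q)) in BQ by ring.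
  replace (KEc * (Kv * Kw) * tau ^ q) with (KEc * (Kv * Kw * tau ^ q)) in H14 by ring.
  lra. Qed.

Lemma D0_val f k : (k <= 2)%nat -> Delta f 0 (gp 1 k) = f (gp 1 k) - f 0.
Proof. intros Hk. pose proof (SS_interp f 1 k ltac:(lia) ltac:(simpl; lia)) as H.
  change (SS f 1 (gp 1 k)) with (f 0 + Delta f 0 (gp 1 k)) in H. lra. Qed.

Lemma Pf_lvl1 i k : (i < n)%nat -> (k <= 2)%nat -> Pf i (gp 1 k) = fsum d (fun j => v i j 0 * (w j (gp 1 k) - w j 0)).
Proof. intros Hi Hk. rewrite (Pf_grid 0 i (gp 1 k) k Hi eq_refl ltac:(simpl; lia)). rewrite Ppart_S.
  change (Ppart d v w 0 i (gp 1 k)) with 0. rewrite Rplus_0_l. apply fsum_ext. intros j _.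
  rewrite D0_val by auto. reflexivity. Qed.

Lemma gp10 : gp 1 0 = 0. Proof. unfold gp; simpl; lra. Qed.
Lemma gp11 : gp 1 1 = / 2. Proof. unfold gp; simpl; lra. Qed.
Lemma gp12 : gp 1 2 = 1. Proof. unfold gp; simpl; lra. Qed.
Lemma gp00 : gp 0 0 = 0. Proof. unfold gp; simpl; lra. Qed.
Lemma gp01 : gp 0 1 = 1. Proof. unfold gp; simpl; lra. Qed.

Lemma Pf_0 i : (i < n)%nat -> Pf i 0 = 0.
Proof. intros Hi. rewrite <- gp10. rewrite Pf_lvl1 by (auto; lia). rewrite gp10. apply fsum_zero'. intros; ring. Qed.

Lemma coefJ_00 i : (i < n)%nat -> Rabs (coef (fun t => I i t - Pf i t) 0 0) <= CJ * (Kv * Kw) * tau ^ 0.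
Proof. intros Hi. unfold coef. rewrite I_at0, Pf_0 by auto.
  rewrite <- gp12. rewrite Pf_lvl1 by (auto; lia). rewrite gp12.
  pose proof (Einf_bound i 0 0 Hi ltac:(simpl; lia)) as E. rewrite gp01, gp00, I_at0 in E by auto.
  assert (EQ : Tr i 0 1 - fsum d (fun j => v i j 0 * (w j 1 - w j 0)) = fsum d (fun j => / 2 * ((v i j 1 - v i j 0) * (w j 1 - w j 0)))).
  { unfold Tr. rewrite <- fsum_minus. apply fsum_ext; intros; field. }
  rewrite fsum_scal in EQ.
  assert (B : Rabs (fsum d (fun j => (v i j 1 - v i j 0) * (w j 1 - w j 0))) <= (Ha_ * Kv) * (Hb_ * Kw)).
  { pose proof Kwp. pose proof Hb_pos. apply fsum_abs_mul_le.
    - pose proof (adj_v i 0 0 Hi ltac:(simpl; lia)) as AV. rewrite gp01, gp00 in AV. simpl in AV. lra.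
    - intros j Hj. pose proof (adj_w j 0 0 Hj ltac:(simpl; lia)) as AW. rewrite gp01, gp00 in AW. simpl in AW. lra.
    - nra. }
  replace (I i 1 - fsum d (fun j => v i j 0 * (w j 1 - w j 0)) - (0 - 0)) with ((I i 1 - 0 - Tr i 0 1) + (Tr i 0 1 - fsum d (fun j => v i j 0 * (w j 1 - w j 0)))) by ring.
  rewrite EQ. eapply Rle_trans; [apply Rabs_triang|]. rewrite Rabs_mult, (Rabs_right (/2)) by lra.
  simpl pow in *. unfold KE in E. pose proof CJ_ge. pose proof KEc_nn. pose proof Ha_pos. pose proof Hb_pos. pose proof Kvp. pose proof Kwp.
  assert (0 <= Kv * Kw) by nra. pose proof CQ_pos.
  assert (Ha_ * Kv * (Hb_ * Kw) = Ha_ * Hb_ * (Kv * Kw)) by ring.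
  assert ((2 * Ha_ * Hb_ + 2 * KEc + CQ) * (Kv * Kw) <= CJ * (Kv * Kw)) by (apply Rmult_le_compat_r; lra).
  assert (0 <= Ha_ * Hb_ * (Kv * Kw)) by (apply Rmult_le_pos; [nra|lra]).
  assert (0 <= KEc * (Kv * Kw)) by (apply Rmult_le_pos; lra).
  assert (0 <= CQ * (Kv * Kw)) by (apply Rmult_le_pos; lra).
  replace (KEc * Kv * Kw * 1) with (KEc * (Kv * Kw)) in E by ring.
  rewrite Rmult_1_r. nra. Qed.

Lemma coefJ_01 i : (i < n)%nat -> Rabs (coef (fun t => I i t - Pf i t) 0 1) <= CJ * (Kv * Kw) * tau ^ 0.
Proof. intros Hi. unfold coef. rewrite t0_01, t1_01, t2_01. rewrite I_at0, Pf_0 by auto.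
  rewrite <- gp11, <- gp12. rewrite !Pf_lvl1 by (auto; lia).
  pose proof (Einf_bound i 1 0 Hi ltac:(simpl; lia)) as E1. rewrite gp10, I_at0 in E1 by auto.
  pose proof (Einf_bound i 1 1 Hi ltac:(simpl; lia)) as E2.
  set (A1 := I i (gp 1 1) - 0 - Tr i 0 (gp 1 1)) in *. set (A2 := I i (gp 1 2) - I i (gp 1 1) - Tr i (gp 1 1) (gp 1 2)) in *.
  assert (EQ : 2 * (I i (gp 1 1) - fsum d (fun j => v i j 0 * (w j (gp 1 1) - w j 0))) - (0 - 0) - (I i (gp 1 2) - fsum d (fun j => v i j 0 * (w j (gp 1 2) - w j 0)))
     = A1 - A2 + (/ 2 * fsum d (fun j => (v i j (gp 1 1) - v i j 0) * (w j (gp 1 1) - w j 0))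
                 - / 2 * fsum d (fun j => ((v i j (gp 1 1) - v i j 0) + (v i j (gp 1 2) - v i j 0)) * (w j (gp 1 2) - w j (gp 1 1))))).
  { unfold A1, A2, Tr. rewrite <- !fsum_scal. 
    assert (forall (f g h : nat -> R), fsum d f - fsum d g = fsum d h -> (forall j, h j = f j - g j) -> True) by auto.
    match goal with |- ?L = ?R => idtac end.
    rewrite <- (fsum_minus d (fun j => / 2 * ((v i j (gp 1 1) - v i j 0) * (w j (gp 1 1) - w j 0)))).
    assert (2 * fsum d (fun j => v i j 0 * (w j (gp 1 1) - w j 0)) = fsum d (fun j => 2 * (v i j 0 * (w j (gp 1 1) - w j 0)))) by (rewrite fsum_scal; auto).
    rewrite (Rmult_minus_distr_l 2 (I i (gp 1 1))). rewrite H0.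
    replace (2 * I i (gp 1 1) - fsum d (fun j => 2 * (v i j 0 * (w j (gp 1 1) - w j 0))) - (0 - 0) -
      (I i (gp 1 2) - fsum d (fun j => v i j 0 * (w j (gp 1 2) - w j 0))))
      with (I i (gp 1 1) - 0 - fsum d (fun j => (v i j 0 + v i j (gp 1 1)) / 2 * (w j (gp 1 1) - w j 0)) -
      (I i (gp 1 2) - I i (gp 1 1) - fsum d (fun j => (v i j (gp 1 1) + v i j (gp 1 2)) / 2 * (w j (gp 1 2) - w j (gp 1 1)))) +
      (fsum d (fun j => (v i j 0 + v i j (gp 1 1)) / 2 * (w j (gp 1 1) - w j 0)) - fsum d (fun j => (v i j (gp 1 1) + v i j (gp 1 2)) / 2 * (w j (gp 1 2) - w j (gp 1 1)))
       - fsum d (fun j => 2 * (v i j 0 * (w j (gp 1 1) - w j 0))) + fsum d (fun j => v i j 0 * (w j (gp 1 2) - w j 0)))) by ring.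
    f_equal. rewrite <- !fsum_minus, <- fsum_plus. apply fsum_ext. intros; field. }
  rewrite EQ.
  pose proof Kvp. pose proof Kwp. pose proof Hb_pos. pose proof Rb. pose proof tau_b.
  assert (Sv : forall k, (k <= 2)%nat -> fsum d (fun j => Rabs (v i j (gp 1 k) - v i j 0)) <= 2 * Kv / (1 - / ra)).
  { intros k Hk. apply sup0_v; auto; simpl; lia. }
  assert (Wb : forall j k, (j < d)%nat -> (k < 2)%nat -> Rabs (w j (gp 1 (S k)) - w j (gp 1 k)) <= Hb_ * Kw).
  { intros j k Hj Hk. eapply Rle_trans. apply adj_w; auto. simpl. unfold Rdiv.
    assert (0 <= Hb_ * Kw) by nra. rewrite Rmult_1_r.
    rewrite <- (Rmult_1_r (Hb_ * Kw)) at 2. apply Rmult_le_compat_l; auto. rewrite <- Rinv_1. apply Rinv_le_contravar; lra. }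
  set (SV := 2 * Kv / (1 - / ra)) in *.
  assert (0 <= SV) by (unfold SV; unfold Rdiv; apply Rmult_le_pos; [lra|left; apply Rinv_0_lt_compat; pose proof (inv_rho_lt1 ra Ra); lra]).
  assert (B1 : Rabs (fsum d (fun j => (v i j (gp 1 1) - v i j 0) * (w j (gp 1 1) - w j 0))) <= SV * (Hb_ * Kw)).
  { apply fsum_abs_mul_le. apply Sv; lia. intros j Hj. pose proof (Wb j 0%nat Hj ltac:(lia)). rewrite gp10 in H5. auto. nra. }
  assert (B2 : Rabs (fsum d (fun j => ((v i j (gp 1 1) - v i j 0) + (v i j (gp 1 2) - v i j 0)) * (w j (gp 1 2) - w j (gp 1 1)))) <= (2 * SV) * (Hb_ * Kw)).
  { apply fsum_abs_mul_le.
    eapply Rle_trans. apply (fsum_le _ _ (fun j => Rabs (v i j (gp 1 1) - v i j 0) + Rabs (v i j (gp 1 2) - v i j 0))). intros; apply Rabs_triang.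
    rewrite fsum_plus. pose proof (Sv 1%nat ltac:(lia)). pose proof (Sv 2%nat ltac:(lia)). lra.
    intros j Hj. apply (Wb j 1%nat Hj ltac:(lia)). nra. }
  assert (Rabs (A1 - A2 + (/ 2 * fsum d (fun j => (v i j (gp 1 1) - v i j 0) * (w j (gp 1 1) - w j 0))
                 - / 2 * fsum d (fun j => ((v i j (gp 1 1) - v i j 0) + (v i j (gp 1 2) - v i j 0)) * (w j (gp 1 2) - w j (gp 1 1)))))
    <= Rabs A1 + Rabs A2 + / 2 * Rabs (fsum d (fun j => (v i j (gp 1 1) - v i j 0) * (w j (gp 1 1) - w j 0)))
       + / 2 * Rabs (fsum d (fun j => ((v i j (gp 1 1) - v i j 0) + (v i j (gp 1 2) - v i j 0)) * (w j (gp 1 2) - w j (gp 1 1))))) by rabs.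
  simpl pow in *. unfold KE in E1, E2. rewrite Rmult_1_r in *.
  pose proof CJ_ge. pose proof KEc_nn. pose proof CQ_pos. pose proof Ha_pos. pose proof Ra as RRa.
  assert (0 <= Kv * Kw) by nra.
  assert (KEc * Kv * Kw * tau <= KEc * (Kv * Kw)).
  { replace (KEc * Kv * Kw * tau) with (KEc * (Kv * Kw) * tau) by ring. rewrite <- (Rmult_1_r (KEc * (Kv * Kw))) at 2.
    apply Rmult_le_compat_l; [apply Rmult_le_pos|]; lra. }
  assert (SV * (Hb_ * Kw) = (2 * Hb_ / (1 - / ra)) * (Kv * Kw)) by (unfold SV; field; split; lra).
  assert ((3 * Hb_ / (1 - / ra)) * (Kv * Kw) = 3 / 2 * ((2 * Hb_ / (1 - / ra)) * (Kv * Kw))) by (field; split; lra).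
  assert (CJ * (Kv * Kw) >= (2 * Ha_ * Hb_ + 2 * KEc + CQ) * (Kv * Kw)) by (apply Rle_ge, Rmult_le_compat_r; lra).
  assert (CJ * (Kv * Kw) >= (3 * Hb_ / (1 - / ra)) * (Kv * Kw)) by (apply Rle_ge, Rmult_le_compat_r; lra).
  assert (0 <= Ha_ * Hb_ * (Kv * Kw)) by (apply Rmult_le_pos; [nra|lra]).
  assert (0 <= CQ * (Kv * Kw)) by (apply Rmult_le_pos; lra).
  assert (CJ * (Kv * Kw) >= 2 * (KEc * (Kv * Kw)) + (3 * Hb_ / (1 - / ra)) * (Kv * Kw)).
  { unfold CJ. replace ((2 * Ha_ * Hb_ + 2 * KEc + CQ + 3 * Hb_ / (1 - / ra)) * (Kv * Kw)) with
      (2 * (Ha_ * Hb_ * (Kv * Kw)) + 2 * (KEc * (Kv * Kw)) + CQ * (Kv * Kw) + 3 * Hb_ / (1 - / ra) * (Kv * Kw)) by ring. lra. }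
  lra. Qed.

Lemma coefJ_bound i q m : (i < n)%nat -> (m <= 2 ^ q)%nat ->
  Rabs (coef (fun t => I i t - Pf i t) q m) <= CJ * (Kv * Kw) * tau ^ q.
Proof. intros Hi Hm. destruct q.
  - simpl in Hm. assert (m = 0 \/ m = 1)%nat as [->| ->] by lia. apply coefJ_00; auto. apply coefJ_01; auto.
  - destruct m.
    + unfold coef. rewrite Rabs_R0. pose proof CJ_ge. pose proof CQ_pos. pose proof KEc_nn. pose proof Ha_pos. pose proof Hb_pos.
      pose proof Kvp. pose proof Kwp. pose proof tau_b.
      apply Rmult_le_pos. apply Rmult_le_pos. lra. nra. apply pow_le; lra.
    + apply coefJ_pos; auto; lia. Qed.

Lemma CJ_nn : 0 <= CJ.
Proof. pose proof CJ_ge. pose proof CQ_pos. pose proof KEc_nn. pose proof Ha_pos. pose proof Hb_pos. nra. Qed.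

Lemma holder_J C : CJ <= C -> vec_holder n (a + b) (fun i t => I i t - Pf i t) (C * Kv * Kw).
Proof. intros HC. pose proof Kvp. pose proof Kwp. pose proof CJ_nn. split.
  - rewrite vnorm_zero by (intros; rewrite I_at0, Pf_0 by auto; ring). rewrite Rmult_0_r.
    apply Rmult_le_pos; [apply Rmult_le_pos|]; lra.
  - intros p m Hm. rewrite Rp_pow, Rpower_plus. fold ra rb. pose proof Ra. pose proof Rb.
    assert (0 < (ra * rb) ^ p) by (apply pow_lt; nra).
    assert (E : (ra * rb) ^ p * tau ^ p = 1).
    { unfold tau. rewrite pow_inv. field. apply pow_nonzero. nra. }
    apply (Rmult_le_reg_r (tau ^ p)). apply pow_lt, tau_b.
    rewrite Rmult_comm, <- Rmult_assoc, (Rmult_comm (tau ^ p)), E, Rmult_1_l.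
    unfold vnorm. apply fmax_le. apply Rmult_le_pos. apply Rmult_le_pos; [apply Rmult_le_pos|]; lra. apply pow_le. pose proof tau_b; lra.
    intros i Hi. eapply Rle_trans. apply coefJ_bound; auto.
    apply Rmult_le_compat_r. apply pow_le. pose proof tau_b; lra.
    rewrite Rmult_assoc. apply Rmult_le_compat_r; [apply Rmult_le_pos; lra| lra]. Qed.
End Hold.

Theorem mainTheorem9 (alpha beta : R)
  (Ha : 0 < alpha < 1) (Hb : 0 < beta < 1) (Hab : alpha + beta > 1) :
  exists C : R, 0 < C /\
  forall (n d : nat) (v : nat -> nat -> R -> R) (w : nat -> R -> R),
    mat_cont01 n d v -> vec_cont01 d w ->
    (exists K, mat_holder n d alpha v K) ->
    (exists K, vec_holder d beta w K) ->
    exists I Lf Sf Pf : nat -> R -> R,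
      unif_cv01 n (fun N => Iapprox d v w N) I /\
      pw_cv01 n (fun P => Lpart d v w P) Lf /\
      pw_cv01 n (fun P => Spart d v w P) Sf /\
      pw_cv01 n (fun P => Ppart d v w P) Pf /\
      (forall i t, (i < n)%nat -> 0 <= t <= 1 -> I i t = Lf i t + Sf i t + Pf i t) /\
      vec_cont01 n I /\
      vec_cont01 n (fun i t => I i t - Pf i t) /\
      (forall Kv Kw, mat_holder n d alpha v Kv -> vec_holder d beta w Kw ->
         vec_holder n beta I (C * Kv * Kw) /\
         vec_holder n (alpha + beta) (fun i t => I i t - Pf i t) (C * Kv * Kw)).
Proof.
  assert (Hab' : 1 < alpha + beta) by (unfold Rgt in Hab; auto).
  pose proof (CI_nn alpha beta Ha Hb Hab'). pose proof (CJ_nn alpha beta Ha Hb Hab').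
  exists (CI alpha beta + CJ alpha beta + 1). split; [lra|].
  intros n d v w _ _ [K1 HK1] [K2 HK2].
  destruct (conv_main alpha beta Ha Hb Hab' n d v w K1 K2 HK1 HK2) as [I [Lf [Sf [Pf [HI [HL [HS [HP [HE [HC1 HC2]]]]]]]]]].
  exists I, Lf, Sf, Pf. repeat (split; [assumption|]).
  intros Kv Kw HV HW. split.
  - apply (holder_I alpha beta Ha Hb Hab' n d v w Kv Kw HV HW I); [|lra].
    apply unif_pw; auto.
  - apply (holder_J alpha beta Ha Hb Hab' n d v w Kv Kw HV HW I); [apply unif_pw; auto| exact HP | lra].
Qed.
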